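(* Let $k\ge1$, let $A\neq B$ be points of $S^1$, and let $\Delta:(S^1,A)\to(S^1,B)$ be a germ of local diffeomorphism. Let $\gimel(\Delta;A,B)$ be the subalgebra of $C^\infty(S^1,\mathbb{R})$ consisting of all functions $f$ such that the $(k-1)$-jets at $A$ of $f$ and of $f\circ\Delta$ coincide. Then $\gimel(\Delta;A,B)$ belongs to $\overline{CD}_k(S^1)$, i.e., it is an equilevel algebra of codimension $k$.
   Context: Let $S^1=\mathbb{R}/2\pi\mathbb{Z}$. For $k\ge 1$ let $F(S^1,2k)\subset (S^1)^{2k}$ be the set of sequences $(x_1,\tilde x_1;\dots;x_k,\tilde x_k)$ of $2k$ pairwise distinct points; such a sequence defines the subalgebra $\{f\in C^\infty(S^1,\mathbb{R}): f(x_i)=f(\tilde x_i)\ \forall i\}$. Given an algebraic parametric curve germ $\nu:[0,\varepsilon)\to (S^1)^{2k}$ with $\nu(t)\in F(S^1,2k)$ for $t\in(0,\varepsilon)$, let $\mathcal{F}_t$ be the subalgebra defined by $\nu(t)$, and let $\mathcal{F}_0$ be the set of all $f$ for which there exists a family $f_t$, $t\in[0,\varepsilon)$, continuous in the $C^{2k}$ topology, with $f_0=f$ and $f_t\in\mathcal{F}_t$ for $t>0$. Such $\mathcal{F}_0$ are the equilevel algebras of codimension $k$; their set is $\overline{CD}_k(S^1)$. *)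

(* Defs.v *)
From Stdlib Require Import Reals Lra ZArith.
From Coquelicot Require Import Coquelicot.
Open Scope R_scope.

(** Points of S^1 = R/2piZ are represented by real representatives;
    two reals represent the same point iff they differ by 2*PI*z. *)
Definition eqS1 (x y : R) : Prop := exists z : Z, x - y = 2 * PI * IZR z.

(** Functions on S^1: 2pi-periodic functions R -> R. *)
Definition periodic (f : R -> R) : Prop := forall x, f (x + 2 * PI) = f x.

Definition smooth (f : R -> R) : Prop := forall (n : nat) (x : R), ex_derive_n f n x.

Definition CinfS1 (f : R -> R) : Prop := smooth f /\ periodic f.

Definition smooth_near (D : R -> R) (a r : R) : Prop :=
  forall x, Rabs (x - a) < r -> forall n : nat, ex_derive_n D n x.

(** A germ of local diffeomorphism (S^1,A) -> (S^1,B), given by a lift D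
    with D A = B (the representatives A, B being fixed): D restricts to a
    smooth diffeomorphism between neighbourhoods of A and B, with smooth
    inverse G. Only the values of D near A matter. *)
Definition local_diffeo_germ (D : R -> R) (A B : R) : Prop :=
  D A = B /\
  exists (r s : R) (G : R -> R), 0 < r /\ 0 < s /\
    smooth_near D A r /\ smooth_near G B s /\
    (forall x, Rabs (x - A) < r -> Rabs (D x - B) < s /\ G (D x) = x) /\
    (forall y, Rabs (y - B) < s -> Rabs (G y - A) < r /\ D (G y) = y).

Definition gimel (k : nat) (D : R -> R) (A : R) (f : R -> R) : Prop :=
  CinfS1 f /\
  forall j : nat, (j < k)%nat -> Derive_n f j A = Derive_n (fun x => f (D x)) j A.

Fixpoint rsum (n : nat) (f : nat -> R) : R :=
  match n with
  | O => 0
  | S m => rsum m f + f m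
  end.

Definition cont_on_Ico (eps : R) (g : R -> R) : Prop :=
  forall t0, 0 <= t0 < eps -> forall d, 0 < d ->
    exists h, 0 < h /\ forall t, 0 <= t < eps -> Rabs (t - t0) < h ->
      Rabs (g t - g t0) < d.

Definition algebraic_on (eps : R) (g : R -> R) : Prop :=
  exists (N : nat) (c : nat -> nat -> R),
    (exists a b, (a < N)%nat /\ (b < N)%nat /\ c a b <> 0) /\
    forall t, 0 <= t < eps ->
      rsum N (fun a => rsum N (fun b => c a b * t ^ a * (g t) ^ b)) = 0.

(** A curve nu : [0,eps) -> (S^1)^(2k), given via lifts of its 2k angle
    coordinates nu t 0, ..., nu t (2k-1); the sequence is
    (x_1, x~_1; ...; x_k, x~_k) with x_{i+1} = nu t (2i), x~_{i+1} = nu t (2i+1).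
    Algebraic parametric curve germ: each coordinate is continuous and
    algebraic in t on [0, eps). *)
Definition alg_curve_germ (k : nat) (eps : R) (nu : R -> nat -> R) : Prop :=
  0 < eps /\
  forall i : nat, (i < 2 * k)%nat ->
    cont_on_Ico eps (fun t => nu t i) /\ algebraic_on eps (fun t => nu t i).

Definition in_config (k : nat) (p : nat -> R) : Prop :=
  forall i j : nat, (i < 2 * k)%nat -> (j < 2 * k)%nat -> i <> j -> ~ eqS1 (p i) (p j).

Definition alg_of_config (k : nat) (p : nat -> R) (f : R -> R) : Prop :=
  CinfS1 f /\ forall i : nat, (i < k)%nat -> f (p (2 * i)%nat) = f (p (2 * i + 1)%nat).

Definition Cm_continuous_family (m : nat) (eps : R) (F : R -> R -> R) : Prop :=
  forall t0, 0 <= t0 < eps -> forall d, 0 < d ->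
    exists h, 0 < h /\ forall t, 0 <= t < eps -> Rabs (t - t0) < h ->
      forall (j : nat) (x : R), (j <= m)%nat ->
        Rabs (Derive_n (F t) j x - Derive_n (F t0) j x) < d.

Definition limit_algebra (k : nat) (eps : R) (nu : R -> nat -> R) (f : R -> R) : Prop :=
  exists F : R -> R -> R,
    F 0 = f /\
    CinfS1 f /\
    (forall t, 0 < t < eps -> alg_of_config k (nu t) (F t)) /\
    Cm_continuous_family (2 * k) eps F.

Definition in_CDbar (k : nat) (Alg : (R -> R) -> Prop) : Prop :=
  exists (eps : R) (nu : R -> nat -> R),
    alg_curve_germ k eps nu /\
    (forall t, 0 < t < eps -> in_config k (nu t)) /\
    forall f, limit_algebra k eps nu f <-> Alg f.

(* Main.v *)
Require Import Defs.
From Stdlib Require Import Reals Lra Lia ZArith Arith FunctionalExtensionality.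
From Coquelicot Require Import Coquelicot.
Open Scope R_scope.

Lemma loc_ball (P : R -> Prop) x r : 0 < r -> (forall y, Rabs (y - x) < r -> P y) -> locally x P.
Proof. intros Hr H. exists (mkposreal r Hr). intros y Hy. apply H. exact Hy. Qed.

Lemma loc_ball_inv (P : R -> Prop) x : locally x P -> exists r, 0 < r /\ forall y, Rabs (y - x) < r -> P y.
Proof. intros [e He]. exists e. split. apply cond_pos. intros y Hy. apply He. exact Hy. Qed.

Definition openU (U : R -> Prop) := forall x, U x -> exists d, 0 < d /\ forall y, Rabs (y - x) < d -> U y.

Lemma openU_loc U x : openU U -> U x -> locally x U.
Proof. intros HU Hx. destruct (HU x Hx) as [d [Hd H]]. apply loc_ball with d; auto. Qed.

Lemma openU_T : openU (fun _ => True).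
Proof. intros x _. exists 1. split; auto; lra. Qed.

Lemma openU_ball A r : openU (fun y => Rabs (y - A) < r).
Proof. intros x Hx. exists (r - Rabs (x - A)). split. lra. intros y Hy.
  replace (y - A) with ((y - x) + (x - A)) by ring.
  eapply Rle_lt_trans. apply Rabs_triang. lra. Qed.

Definition Cn (U : R -> Prop) (n : nat) (g : R -> R) :=
  forall x, U x -> forall m, (m <= n)%nat -> ex_derive_n g m x.

Definition SmU (U : R -> Prop) (g : R -> R) := forall n, Cn U n g.

Lemma Derive_n_S' f n x : Derive_n f (S n) x = Derive_n (Derive f) n x.
Proof. rewrite <- Nat.add_1_r. rewrite <- (Derive_n_comp f n 1). reflexivity. Qed.

Lemma Derive_n_S_fun f n : Derive_n f (S n) = Derive_n (Derive f) n.
Proof. apply functional_extensionality. intro x. apply Derive_n_S'. Qed.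

Lemma ex_derive_n_S f n x : ex_derive_n f (S (S n)) x <-> ex_derive_n (Derive f) (S n) x.
Proof. simpl. rewrite <- Derive_n_S_fun. simpl. tauto. Qed.

Lemma Cn_S U n g : Cn U (S n) g <-> ((forall x, U x -> ex_derive g x) /\ Cn U n (Derive g)).
Proof. split.
  - intros H. split.
    + intros x Hx. exact (H x Hx 1%nat ltac:(lia)).
    + intros x Hx m Hm. destruct m as [|m]. exact I.
      apply (proj1 (ex_derive_n_S g m x)). apply H; auto; lia.
  - intros [H1 H2] x Hx m Hm. destruct m as [|m]. exact I.
    destruct m as [|m]. exact (H1 x Hx).
    apply (proj2 (ex_derive_n_S g m x)). apply H2; auto; lia.
Qed.

Lemma Cn_weak U n m g : (m <= n)%nat -> Cn U n g -> Cn U m g.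
Proof. intros Hmn H x Hx j Hj. apply H; auto; lia. Qed.

Lemma Cn_loc U n g x : openU U -> U x -> Cn U n g ->
  locally x (fun y => forall k, (k <= n)%nat -> ex_derive_n g k y).
Proof. intros HU Hx H. destruct (HU x Hx) as [d [Hd Hd']].
  apply loc_ball with d; auto. Qed.

Lemma Cn_ext U n g h : openU U -> (forall y, U y -> g y = h y) -> Cn U n g -> Cn U n h.
Proof. intros HU Heq H x Hx m Hm. apply ex_derive_n_ext_loc with g.
  apply (filter_imp _ _ (fun y Hy => Heq y Hy) (openU_loc U x HU Hx)).
  apply H; auto. Qed.

Lemma Cn_plus U n g h : openU U -> Cn U n g -> Cn U n h -> Cn U n (fun y => g y + h y).
Proof. intros HU Hg Hh x Hx m Hm. apply ex_derive_n_plus.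
  - refine (filter_imp _ _ _ (Cn_loc U n g x HU Hx Hg)).
    intros y Hy k Hk. apply Hy. lia.
  - refine (filter_imp _ _ _ (Cn_loc U n h x HU Hx Hh)).
    intros y Hy k Hk. apply Hy. lia.
Qed.

Lemma Cn_const U n c : openU U -> Cn U n (fun _ => c).
Proof. intro HU. revert c. induction n; intros c.
  - intros x Hx m Hm. replace m with 0%nat by lia. exact I.
  - apply Cn_S. split. intros; apply ex_derive_const.
    apply Cn_ext with (fun _ => 0). auto. intros y _. rewrite Derive_const. reflexivity.
    apply IHn.
Qed.

Lemma Derive_plus' (g h : R -> R) x : ex_derive g x -> ex_derive h x ->
  Derive (fun y => g y + h y) x = Derive g x + Derive h x.
Proof. intros. apply Derive_plus; auto. Qed.

Lemma Cn_mult U n : openU U -> forall g h, Cn U n g -> Cn U n h -> Cn U n (fun y => g y * h y).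
Proof. intros HU. induction n; intros g h Hg Hh.
  - intros x Hx m Hm. replace m with 0%nat by lia. exact I.
  - apply Cn_S in Hg as Hg'. apply Cn_S in Hh as Hh'. destruct Hg' as [Hg1 Hg2]. destruct Hh' as [Hh1 Hh2].
    apply Cn_S. split.
    + intros x Hx. apply ex_derive_mult; auto.
    + apply Cn_ext with (fun y => Derive g y * h y + g y * Derive h y). auto.
      intros y Hy. rewrite Derive_mult; auto.
      apply Cn_plus; auto.
      * apply IHn; auto. apply Cn_weak with (S n); auto.
      * apply IHn; auto. apply Cn_weak with (S n); auto.
Qed.

Lemma Cn_comp U n : openU U -> forall g X, Cn (fun _ => True) n g -> Cn U n X -> Cn U n (fun y => g (X y)).
Proof. intros HU. induction n; intros g X Hg HX.
  - intros x Hx m Hm. replace m with 0%nat by lia. exact I.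
  - apply Cn_S in Hg as Hg'. apply Cn_S in HX as HX'. destruct Hg' as [Hg1 Hg2]. destruct HX' as [HX1 HX2].
    apply Cn_S. split.
    + intros x Hx. apply ex_derive_comp; auto.
    + apply Cn_ext with (fun y => Derive g (X y) * Derive X y). auto.
      intros y Hy.
      assert (H := is_derive_comp g X y _ _ (Derive_correct _ _ (Hg1 (X y) I)) (Derive_correct _ _ (HX1 y Hy))).
      symmetry. transitivity (scal (Derive X y) (Derive g (X y))). apply is_derive_unique; exact H.
      unfold scal; simpl; unfold mult; simpl. ring.
      apply Cn_mult; auto. apply IHn; auto. apply Cn_weak with (S n); auto.
Qed.

Lemma Cn_Derive U n g : Cn U (S n) g -> Cn U n (Derive g).
Proof. intros H. apply Cn_S in H. tauto. Qed.

Lemma SmU_plus U g h : openU U -> SmU U g -> SmU U h -> SmU U (fun y => g y + h y).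
Proof. intros HU Hg Hh n. apply Cn_plus; auto. Qed.
Lemma SmU_mult U g h : openU U -> SmU U g -> SmU U h -> SmU U (fun y => g y * h y).
Proof. intros HU Hg Hh n. apply Cn_mult; auto. Qed.
Lemma SmU_const U c : openU U -> SmU U (fun _ => c).
Proof. intros HU n. apply Cn_const; auto. Qed.
Lemma SmU_comp U g X : openU U -> SmU (fun _ => True) g -> SmU U X -> SmU U (fun y => g (X y)).
Proof. intros HU Hg HX n. apply Cn_comp; auto. Qed.
Lemma SmU_Derive U g : SmU U g -> SmU U (Derive g).
Proof. intros H n. apply Cn_Derive. apply H. Qed.
Lemma SmU_ext U g h : openU U -> (forall y, U y -> g y = h y) -> SmU U g -> SmU U h.
Proof. intros HU He H n. apply Cn_ext with g; auto. Qed.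
Lemma SmU_id U : openU U -> SmU U (fun y => y).
Proof. intros HU n. destruct n. intros x _ m Hm. replace m with 0%nat by lia. exact I.
  apply Cn_S. split. intros; apply ex_derive_id.
  apply Cn_ext with (fun _ => 1). auto. intros y _. rewrite Derive_id. reflexivity.
  apply Cn_const; auto. Qed.
Lemma SmU_ex_derive U g x : SmU U g -> U x -> ex_derive g x.
Proof. intros H Hx. exact (H 1%nat x Hx 1%nat (le_n _)). Qed.
Lemma SmU_sub U g : openU U -> SmU (fun _ => True) g -> SmU U g.
Proof. intros HU H n x Hx. apply H. exact I. Qed.
Fixpoint rprod (n : nat) (f : nat -> R) : R :=
  match n with O => 1 | S m => rprod m f * f m end.

Lemma rsum_ext n f g : (forall i, (i < n)%nat -> f i = g i) -> rsum n f = rsum n g.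
Proof. induction n; simpl; intros H; auto. rewrite IHn. rewrite H; auto. intros; apply H; lia. Qed.

Lemma rprod_ext n f g : (forall i, (i < n)%nat -> f i = g i) -> rprod n f = rprod n g.
Proof. induction n; simpl; intros H; auto. rewrite IHn. rewrite H; auto. intros; apply H; lia. Qed.

Lemma rsum_zero n f : (forall i, (i < n)%nat -> f i = 0) -> rsum n f = 0.
Proof. induction n; simpl; intros H; auto. rewrite IHn, H; auto; try ring; try (intros; apply H; lia). Qed.

Lemma rsum_single n f i : (i < n)%nat -> (forall l, (l < n)%nat -> l <> i -> f l = 0) -> rsum n f = f i.
Proof. induction n; intros Hi H. lia. simpl. destruct (Nat.eq_dec i n).
  - subst. rewrite rsum_zero. ring. intros l Hl. apply H; lia.
  - rewrite IHn. rewrite (H n). ring. lia. lia. lia. intros; apply H; lia. Qed.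

Lemma rprod_zero n f i : (i < n)%nat -> f i = 0 -> rprod n f = 0.
Proof. induction n; intros Hi H. lia. simpl. destruct (Nat.eq_dec i n).
  - subst. rewrite H. ring.
  - rewrite IHn; auto. ring. lia. Qed.

Lemma rsum_abs_bound n f e : (forall a, (a < n)%nat -> Rabs (f a) <= e) -> Rabs (rsum n f) <= INR n * e.
Proof. induction n; intros H. simpl. rewrite Rabs_R0. lra.
  change (rsum (S n) f) with (rsum n f + f n).
  eapply Rle_trans. apply Rabs_triang. rewrite S_INR.
  assert (Rabs (rsum n f) <= INR n * e) by (apply IHn; intros; apply H; lia).
  assert (Rabs (f n) <= e) by (apply H; lia). lra. Qed.

Lemma rsum_plus n f g : rsum n (fun a => f a + g a) = rsum n f + rsum n g.
Proof. induction n; simpl. ring. rewrite IHn. ring. Qed.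

Lemma rsum_scal n f c : rsum n (fun a => c * f a) = c * rsum n f.
Proof. induction n; simpl. ring. rewrite IHn. ring. Qed.

Lemma rsum_shift n f : rsum (S n) f = f 0%nat + rsum n (fun a => f (S a)).
Proof. induction n; simpl. ring. simpl in IHn. rewrite IHn. ring. Qed.

Lemma SmU_rsum U n g : openU U -> (forall a, (a < n)%nat -> SmU U (g a)) -> SmU U (fun y => rsum n (fun a => g a y)).
Proof. intros HU. induction n; intros H; simpl.
  apply SmU_const; auto.
  apply SmU_plus; [exact HU | apply IHn; intros; apply H; lia | apply H; lia]. Qed.

Lemma SmU_rprod U n g : openU U -> (forall a, (a < n)%nat -> SmU U (g a)) -> SmU U (fun y => rprod n (fun a => g a y)).
Proof. intros HU. induction n; intros H; simpl.
  apply SmU_const; auto.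
  apply SmU_mult; [exact HU | apply IHn; intros; apply H; lia | apply H; lia]. Qed.

Lemma SmU_sumf U n g : openU U -> (forall a, (a <= n)%nat -> SmU U (g a)) -> SmU U (fun y => sum_f_R0 (fun a => g a y) n).
Proof. intros HU. induction n; intros H; simpl.
  apply H; lia.
  apply SmU_plus; [exact HU | apply IHn; intros; apply H; lia | apply H; lia]. Qed.

Lemma SmU_pow U m A : openU U -> SmU U (fun y => (y - A) ^ m).
Proof. intros HU. induction m; simpl. apply SmU_const; auto.
  apply SmU_mult; auto. apply SmU_plus; auto. apply SmU_id; auto. apply SmU_const; auto. Qed.

Lemma is_derive_rsum n g dg x : (forall a, (a < n)%nat -> is_derive (g a) x (dg a)) ->
  is_derive (fun y => rsum n (fun a => g a y)) x (rsum n dg).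
Proof. induction n; intros H; simpl.
  exact (is_derive_const _ _).
  apply (is_derive_plus (fun y => rsum n (fun a => g a y)) (g n)). apply IHn. intros; apply H; lia. apply H; lia. Qed.

Definition cont_at (g : R -> R) x := forall e, 0 < e -> exists d, 0 < d /\ forall y, Rabs (y - x) < d -> Rabs (g y - g x) < e.

Lemma cpt_cont g x : continuity_pt g x -> cont_at g x.
Proof. intros H e He. destruct (H e He) as [d [Hd H']]. exists d. split; auto.
  intros y Hy. destruct (Req_dec y x). subst. rewrite Rminus_diag, Rabs_R0; auto.
  apply H'. split. split. exact I. auto. exact Hy. Qed.

Lemma ex_derive_cont g x : ex_derive g x -> cont_at g x.
Proof. intros H. apply cpt_cont. apply continuity_pt_filterlim. apply (ex_derive_continuous (K:=R_AbsRing) (V:=R_NormedModule)). exact H. Qed.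

Lemma ex_derive_cpt g x : ex_derive g x -> continuity_pt g x.
Proof. intros H. apply continuity_pt_filterlim. apply (ex_derive_continuous (K:=R_AbsRing) (V:=R_NormedModule)). exact H. Qed.

Lemma Rabs_small a : (forall e, 0 < e -> Rabs a < e) -> a = 0.
Proof. intros H. destruct (Req_dec a 0); auto. exfalso.
  assert (0 < Rabs a) by (apply Rabs_pos_lt; auto). specialize (H (Rabs a) H1). lra. Qed.

Lemma cont_bound_near g x : cont_at g x -> exists d, 0 < d /\ forall y, Rabs (y - x) < d -> Rabs (g y) <= Rabs (g x) + 1.
Proof. intros H. destruct (H 1 Rlt_0_1) as [d [Hd H']]. exists d; split; auto. intros y Hy.
  specialize (H' y Hy). replace (g y) with ((g y - g x) + g x) by ring.
  eapply Rle_trans. apply Rabs_triang. lra. Qed.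

Lemma fact_pos n : 0 < INR (fact n).
Proof. apply lt_0_INR. apply lt_O_fact. Qed.

Lemma sum_f_R0_zero f n : (forall m, (m <= n)%nat -> f m = 0) -> sum_f_R0 f n = 0.
Proof. induction n; simpl; intros H. apply H; lia. rewrite IHn, H; auto; try ring; try (intros; apply H; lia). Qed.

Definition ballU A r := fun y => Rabs (y - A) < r.

Lemma OC1 h A r k : (1 <= k)%nat -> 0 < r -> SmU (ballU A r) h ->
  (forall j, (j < k)%nat -> Derive_n h j A = 0) ->
  exists C d, 0 < d /\ forall x, A < x < A + d -> Rabs (h x) <= C * (x - A) ^ k.
Proof. intros Hk Hr Hh Hj.
  assert (HA : ballU A r A) by (unfold ballU; rewrite Rminus_diag, Rabs_R0; auto).
  assert (Hc : cont_at (Derive_n h k) A). apply ex_derive_cont. exact (Hh (S k) A HA (S k) (le_n _)).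
  destruct (cont_bound_near _ _ Hc) as [d1 [Hd1 Hb]].
  exists ((Rabs (Derive_n h k A) + 1) / INR (fact k)), (Rmin d1 r). split. apply Rmin_pos; auto.
  intros x Hx. destruct k as [|k]. lia.
  destruct (Taylor_Lagrange h k A x) as [z [Hz Heq]]. lra.
  { intros t Ht m Hm. refine (Hh m t _ m (le_n _)). unfold ballU. rewrite Rabs_right by lra.
    assert (Rmin d1 r <= r) by apply Rmin_r. lra. }
  rewrite Heq. rewrite sum_f_R0_zero. rewrite Rplus_0_l.
  2:{ intros m Hm. rewrite Hj by lia. ring. }
  rewrite Rabs_mult. unfold Rdiv. rewrite Rabs_mult. rewrite (Rabs_right ((x - A) ^ S k)).
  2:{ apply Rle_ge, pow_le. lra. }
  rewrite Rabs_right. 2:{ apply Rle_ge. left. apply Rinv_0_lt_compat, fact_pos. }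
  assert (Rabs (Derive_n h (S k) z) <= Rabs (Derive_n h (S k) A) + 1).
  { apply Hb. rewrite Rabs_right by lra. assert (Rmin d1 r <= d1) by apply Rmin_l. lra. }
  assert (0 <= (x - A) ^ S k) by (apply pow_le; lra).
  assert (0 < / INR (fact (S k))) by (apply Rinv_0_lt_compat, fact_pos).
  replace ((Rabs (Derive_n h (S k) A) + 1) * / INR (fact (S k)) * (x - A) ^ S k) with
     ((x - A) ^ S k * / INR (fact (S k)) * (Rabs (Derive_n h (S k) A) + 1)) by ring.
  apply Rmult_le_compat_l; auto. apply Rmult_le_pos; lra.
Qed.
Lemma pow_le1 u n : 0 <= u <= 1 -> u ^ n <= 1.
Proof. intros Hu. induction n. simpl; lra. change (u ^ S n) with (u * u ^ n).
  assert (0 <= u ^ n) by (apply pow_le; lra). nra. Qed.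
Lemma pow_le_self u n : 0 <= u <= 1 -> (1 <= n)%nat -> u ^ n <= u.
Proof. intros Hu Hn. destruct n. lia. change (u ^ S n) with (u * u ^ n).
  pose proof (pow_le1 u n Hu). assert (0 <= u ^ n) by (apply pow_le; lra). nra. Qed.

Lemma OC2 h A r k C d : (1 <= k)%nat -> 0 < r -> SmU (ballU A r) h -> 0 < d ->
  (forall x, A < x < A + d -> Rabs (h x) <= C * (x - A) ^ k) ->
  forall j, (j < k)%nat -> Derive_n h j A = 0.
Proof. intros Hk Hr Hh Hd Hb j.
  assert (HA : ballU A r A) by (unfold ballU; rewrite Rminus_diag, Rabs_R0; auto).
  set (C' := Rabs C + 1).
  assert (HC' : 0 < C') by (unfold C'; pose proof (Rabs_pos C); lra).
  assert (Hb' : forall x, A < x < A + d -> Rabs (h x) <= C' * (x - A) ^ k).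
  { intros x Hx. eapply Rle_trans. apply Hb; auto. apply Rmult_le_compat_r.
    apply pow_le; lra. unfold C'. pose proof (Rle_abs C). lra. }
  induction j as [j IH] using (well_founded_induction lt_wf). intros Hjk.
  assert (Hcont : cont_at (Derive_n h j) A).
  { apply ex_derive_cont. exact (Hh (S j) A HA (S j) (le_n _)). }
  apply Rabs_small. intros e He.
  destruct (Hcont (e/2)) as [eta [Heta Hc]]. lra.
  set (K := C' * INR (fact j)).
  assert (HK : 0 < K) by (unfold K; apply Rmult_lt_0_compat; auto; apply fact_pos).
  set (u := Rmin (Rmin eta d) (Rmin r (Rmin 1 (e / (2 * K)))) / 2).
  assert (Hu0 : 0 < u).
  { unfold u. assert (0 < e/(2*K)) by (apply Rdiv_lt_0_compat; lra).
    assert (0 < Rmin (Rmin eta d) (Rmin r (Rmin 1 (e / (2 * K))))) by (repeat apply Rmin_pos; lra). lra. }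
  assert (Hu1 : u < eta /\ u < d /\ u < r /\ u <= 1 /\ u <= e / (2 * K)).
  { unfold u. assert (0 < e / (2*K)) by (apply Rdiv_lt_0_compat; lra).
    pose proof (Rmin_l (Rmin eta d) (Rmin r (Rmin 1 (e / (2 * K))))).
    pose proof (Rmin_r (Rmin eta d) (Rmin r (Rmin 1 (e / (2 * K))))).
    pose proof (Rmin_l eta d). pose proof (Rmin_r eta d).
    pose proof (Rmin_l r (Rmin 1 (e / (2 * K)))). pose proof (Rmin_r r (Rmin 1 (e / (2 * K)))).
    pose proof (Rmin_l 1 (e / (2 * K))). pose proof (Rmin_r 1 (e / (2 * K))).
    assert (0 < Rmin (Rmin eta d) (Rmin r (Rmin 1 (e / (2 * K))))) by (repeat apply Rmin_pos; lra).
    lra. }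
  destruct Hu1 as [Hue [Hud [Hur [Hu1 HuK]]]].
  set (x := A + u).
  assert (Hx : A < x < A + d) by (unfold x; lra).
  assert (Hhx := Hb' x Hx). replace (x - A) with u in Hhx by (unfold x; ring).
  assert (Huk : u ^ k <= u) by (apply pow_le_self; lra || lia).
  destruct j as [|j].
  - simpl. replace (h A) with ((h A - h x) + h x) by ring.
    eapply Rle_lt_trans. apply Rabs_triang.
    assert (Rabs (h x - h A) < e / 2).
    { apply Hc. unfold x. replace (A + u - A) with u by ring. rewrite Rabs_right; lra. }
    rewrite Rabs_minus_sym in H.
    assert (C' * u ^ k <= C' * u) by (apply Rmult_le_compat_l; lra).
    assert (C' * u <= e / 2).
    { assert (K = C') by (unfold K; simpl; ring). rewrite <- H1.
      apply Rle_trans with (K * (e / (2 * K))). apply Rmult_le_compat_l; lra.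
      right. field. lra. }
    lra.
  - destruct (Taylor_Lagrange h j A x) as [z [Hz Heq]]. lra.
    { intros t Ht m Hm. refine (Hh m t _ m (le_n _)). unfold ballU.
      rewrite Rabs_right by lra. unfold x in Ht. lra. }
    rewrite sum_f_R0_zero in Heq. 2:{ intros m Hm. rewrite IH; try lia. ring. }
    rewrite Rplus_0_l in Heq. replace (x - A) with u in Heq by (unfold x; ring).
    assert (Hz' : Rabs (Derive_n h (S j) z) <= K * u).
    { rewrite Heq in Hhx. rewrite Rabs_mult in Hhx. unfold Rdiv in Hhx. rewrite Rabs_mult in Hhx.
      rewrite (Rabs_right (u ^ S j)) in Hhx by (apply Rle_ge, pow_le; lra).
      rewrite (Rabs_right (/ INR (fact (S j)))) in Hhx by (apply Rle_ge; left; apply Rinv_0_lt_compat, fact_pos).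
      replace k with (S j + (k - S j))%nat in Hhx by lia.
      rewrite pow_add in Hhx.
      assert (Hp : u ^ (k - S j) <= u) by (apply pow_le_self; lra || lia).
      assert (Hpj : 0 < u ^ S j) by (apply pow_lt; lra).
      assert (Hf := fact_pos (S j)).
      assert (Hd' : Rabs (Derive_n h (S j) z) * / INR (fact (S j)) <= C' * u).
      { apply Rmult_le_reg_l with (u ^ S j). auto.
        apply Rle_trans with (C' * (u ^ S j * u ^ (k - S j))). nra.
        assert (C' * (u ^ S j * u ^ (k - S j)) <= C' * (u ^ S j * u)).
        { apply Rmult_le_compat_l. lra. apply Rmult_le_compat_l; lra. }
        nra. }
      unfold K. apply Rmult_le_reg_r with (/ INR (fact (S j))). apply Rinv_0_lt_compat; auto.
      replace (C' * INR (fact (S j)) * u * / INR (fact (S j))) with (C' * u) by (field; lra).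
      exact Hd'. }
    replace (Derive_n h (S j) A) with ((Derive_n h (S j) A - Derive_n h (S j) z) + Derive_n h (S j) z) by ring.
    eapply Rle_lt_trans. apply Rabs_triang.
    assert (Rabs (Derive_n h (S j) z - Derive_n h (S j) A) < e / 2).
    { apply Hc. rewrite Rabs_right; unfold x in Hz; lra. }
    rewrite Rabs_minus_sym in H.
    assert (K * u <= e / 2).
    { apply Rle_trans with (K * (e / (2 * K))). apply Rmult_le_compat_l; lra.
      right. field. lra. }
    lra.
Qed.
Lemma Rolle_D g a b : a < b -> (forall x, a <= x <= b -> ex_derive g x) -> g a = g b ->
  exists c, a < c < b /\ Derive g c = 0.
Proof. intros Hab Hd Heq.
  assert (pr : forall x, a < x < b -> derivable_pt g x).
  { intros x Hx. apply ex_derive_Reals_0. apply Hd. lra. }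
  destruct (Rolle g a b pr) as [c [Pc Hc]].
  intros x Hx. apply ex_derive_cpt. apply Hd; auto. auto. auto.
  exists c. split; auto. rewrite <- (Derive_Reals g c (pr c Pc)). exact Hc. Qed.

Lemma fin_choice (Q : nat -> R -> Prop) m : (forall i, (i <= m)%nat -> exists y, Q i y) ->
  exists w : nat -> R, forall i, (i <= m)%nat -> Q i (w i).
Proof. induction m; intros H.
  - destruct (H 0%nat (le_n _)) as [y Hy]. exists (fun _ => y). intros i Hi. replace i with 0%nat by lia. auto.
  - destruct IHm as [w Hw]. intros; apply H; lia.
    destruct (H (S m) (le_n _)) as [y Hy].
    exists (fun i => if Nat.eq_dec i (S m) then y else w i). intros i Hi.
    destruct (Nat.eq_dec i (S m)). subst; auto. apply Hw; lia. Qed.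

Lemma incr_le (z : nat -> R) n : (forall i, (i < n)%nat -> z i < z (S i)) ->
  forall i l, (i <= l)%nat -> (l <= n)%nat -> z i <= z l.
Proof. intros H i l Hil. induction Hil; intros Hl. lra.
  apply Rle_trans with (z m). apply IHHil; lia. left. apply H. lia. Qed.

Lemma rolle_chain g : SmU (fun _ => True) g -> forall j m (z : nat -> R),
  (forall i, (i < m + j)%nat -> z i < z (S i)) -> (forall i, (i <= m + j)%nat -> g (z i) = 0) ->
  exists w, (forall i, (i < m)%nat -> w i < w (S i)) /\
    (forall i, (i <= m)%nat -> z 0%nat <= w i <= z (m + j)%nat /\ Derive_n g j (w i) = 0).
Proof. intros Hg j. induction j; intros m z Hz Hz0.
  - exists z. split. intros i Hi. apply Hz. lia.
    intros i Hi. split. split; apply (incr_le z (m+0)); auto; lia. simpl. apply Hz0. lia.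
  - destruct (IHj (S m) z) as [w [Hw1 Hw2]].
    intros i Hi; apply Hz; lia. intros i Hi; apply Hz0; lia.
    destruct (fin_choice (fun i c => w i < c < w (S i) /\ Derive (Derive_n g j) c = 0) m) as [w' Hw'].
    { intros i Hi. apply Rolle_D. apply Hw1; lia.
      intros x _. exact (Hg (S j) x I (S j) (le_n _)).
      destruct (Hw2 i ltac:(lia)) as [_ H1]. destruct (Hw2 (S i) ltac:(lia)) as [_ H2]. congruence. }
    exists w'. split.
    + intros i Hi. destruct (Hw' i ltac:(lia)) as [[H1 H2] _]. destruct (Hw' (S i) ltac:(lia)) as [[H3 H4] _]. lra.
    + intros i Hi. destruct (Hw' i Hi) as [[H1 H2] H3]. split.
      * destruct (Hw2 i ltac:(lia)) as [[H4 H5] _]. destruct (Hw2 (S i) ltac:(lia)) as [[H6 H7] _].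
        replace (m + S j)%nat with (S m + j)%nat by lia. lra.
      * exact H3.
Qed.
Lemma term_deriv (r X c : R -> R) a x : ex_derive (Derive_n r a) (X x) -> ex_derive X x -> ex_derive c x ->
  is_derive (fun y => Derive_n r a (X y) * c y) x
    (Derive_n r (S a) (X x) * Derive X x * c x + Derive_n r a (X x) * Derive c x).
Proof. intros H1 H2 H3.
  assert (Hf := is_derive_comp (Derive_n r a) X x _ _ (Derive_correct _ _ H1) (Derive_correct _ _ H2)).
  assert (H := is_derive_mult (fun y => Derive_n r a (X y)) c x _ _ Hf (Derive_correct _ _ H3) Rmult_comm).
  assert (E : Derive_n r (S a) (X x) * Derive X x * c x + Derive_n r a (X x) * Derive c x =
     plus (mult (scal (Derive X x) (Derive (Derive_n r a) (X x))) (c x)) (mult (Derive_n r a (X x)) (Derive c x))).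
  { unfold plus, mult, scal; simpl. unfold mult; simpl. ring. }
  rewrite E. exact H. Qed.

Lemma comp_formula U X : openU U -> SmU U X -> forall j, exists c : nat -> R -> R,
  (forall a, SmU U (c a)) /\ (forall a x, (j < a)%nat -> c a x = 0) /\
  forall r, SmU (fun _ => True) r -> forall x, U x ->
    Derive_n (fun y => r (X y)) j x = rsum (S j) (fun a => Derive_n r a (X x) * c a x).
Proof. intros HU HX j. induction j.
  - exists (fun a _ => if Nat.eq_dec a 0 then 1 else 0). split; [|split].
    + intros a. apply SmU_const; auto.
    + intros a x Ha. destruct (Nat.eq_dec a 0). lia. auto.
    + intros r Hr x Hx. simpl. ring.
  - destruct IHj as [c [Hc1 [Hc2 Hc3]]].
    exists (fun a y => (match a with O => 0 | S a' => Derive X y * c a' y end) + Derive (c a) y).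
    split; [|split].
    + intros a. apply SmU_plus; auto. destruct a. apply SmU_const; auto.
      apply SmU_mult; auto. apply SmU_Derive; auto. apply SmU_Derive; auto.
    + intros a x Ha. destruct a. lia. rewrite Hc2 by lia.
      rewrite (Derive_ext (c (S a)) (fun _ => 0)). rewrite Derive_const. ring.
      intros t. apply Hc2. lia.
    + intros r Hr x Hx.
      change (Derive_n (fun y => r (X y)) (S j) x) with (Derive (Derive_n (fun y => r (X y)) j) x).
      rewrite (Derive_ext_loc _ (fun y => rsum (S j) (fun a => Derive_n r a (X y) * c a y))).
      2:{ apply (filter_imp _ _ (fun y Hy => Hc3 r Hr y Hy) (openU_loc U x HU Hx)). }
      erewrite is_derive_unique.
      2:{ apply (is_derive_rsum (S j) (fun a y => Derive_n r a (X y) * c a y)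
                 (fun a => Derive_n r (S a) (X x) * Derive X x * c a x + Derive_n r a (X x) * Derive (c a) x)).
          intros a Ha. apply term_deriv. exact (Hr (S a) (X x) I (S a) (le_n _)).
          apply (SmU_ex_derive U X x HX Hx). apply (SmU_ex_derive U (c a) x (Hc1 a) Hx). }
      rewrite rsum_plus.
      assert (E1 : rsum (S (S j)) (fun a => Derive_n r a (X x) * Derive X x * c a x * 0 +
                 Derive_n r a (X x) * (match a with O => 0 | S a' => Derive X x * c a' x end + Derive (c a) x))
                 = rsum (S j) (fun a => Derive_n r (S a) (X x) * Derive X x * c a x) +
                   rsum (S j) (fun a => Derive_n r a (X x) * Derive (c a) x)).
      { rewrite rsum_plus. rewrite rsum_zero by (intros; ring). rewrite Rplus_0_l.
        rewrite (rsum_ext (S (S j)) _ (fun a => Derive_n r a (X x) * (match a with O => 0 | S a' => Derive X x * c a' x end)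
          + Derive_n r a (X x) * Derive (c a) x)) by (intros; ring).
        rewrite rsum_plus.
        rewrite (rsum_shift (S j) (fun a => Derive_n r a (X x) * (match a with O => 0 | S a' => Derive X x * c a' x end))).
        change (rsum (S (S j)) (fun a => Derive_n r a (X x) * Derive (c a) x)) with
          (rsum (S j) (fun a => Derive_n r a (X x) * Derive (c a) x) + Derive_n r (S j) (X x) * Derive (c (S j)) x).
        rewrite (Derive_ext (c (S j)) (fun _ => 0)). rewrite Derive_const.
        2:{ intros t. apply Hc2. lia. }
        rewrite (rsum_ext (S j) _ (fun a => Derive_n r (S a) (X x) * Derive X x * c a x)).
        ring. intros i _. cbv beta iota. ring. }
      rewrite <- E1. apply rsum_ext. intros; ring.
Qed.
Definition cont_rel (eps : R) (K : R -> R) t0 :=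
  forall d, 0 < d -> exists h, 0 < h /\ forall t, 0 <= t < eps -> Rabs (t - t0) < h -> Rabs (K t - K t0) < d.

Definition UCt (eps : R) (G : R -> R -> R) :=
  forall t0, 0 <= t0 < eps -> (exists M, forall x, Rabs (G t0 x) <= M) /\
    forall d, 0 < d -> exists h, 0 < h /\ forall t, 0 <= t < eps -> Rabs (t - t0) < h ->
      forall x, Rabs (G t x - G t0 x) < d.

Fixpoint TameN (eps : R) (n : nat) (G : R -> R -> R) : Prop :=
  UCt eps G /\ match n with O => True | S m =>
     exists G', (forall t x, is_derive (G t) x (G' t x)) /\ TameN eps m G' end.

Lemma cont_at_rel eps K t0 : cont_at K t0 -> cont_rel eps K t0.
Proof. intros H d Hd. destruct (H d Hd) as [h [Hh H']]. exists h. split; auto. Qed.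

Lemma UCt_plus eps G H : UCt eps G -> UCt eps H -> UCt eps (fun t x => G t x + H t x).
Proof. intros HG HH t0 Ht0. destruct (HG t0 Ht0) as [[M1 HM1] HG2]. destruct (HH t0 Ht0) as [[M2 HM2] HH2].
  split. exists (M1 + M2). intros x. eapply Rle_trans. apply Rabs_triang. pose proof (HM1 x); pose proof (HM2 x); lra.
  intros d Hd. destruct (HG2 (d/2)) as [h1 [Hh1 H1]]. lra. destruct (HH2 (d/2)) as [h2 [Hh2 H2]]. lra.
  exists (Rmin h1 h2). split. apply Rmin_pos; auto. intros t Ht Htt x.
  assert (Ha : Rabs (t - t0) < h1) by (pose proof (Rmin_l h1 h2); lra).
  assert (Hb : Rabs (t - t0) < h2) by (pose proof (Rmin_r h1 h2); lra).
  specialize (H1 t Ht Ha x). specialize (H2 t Ht Hb x).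
  replace (G t x + H t x - (G t0 x + H t0 x)) with ((G t x - G t0 x) + (H t x - H t0 x)) by ring.
  eapply Rle_lt_trans. apply Rabs_triang. lra. Qed.

Lemma UCt_mult eps G H : UCt eps G -> UCt eps H -> UCt eps (fun t x => G t x * H t x).
Proof. intros HG HH t0 Ht0. destruct (HG t0 Ht0) as [[M1 HM1] HG2]. destruct (HH t0 Ht0) as [[M2 HM2] HH2].
  assert (HM1' : forall x, Rabs (G t0 x) <= Rabs M1) by (intros x; pose proof (HM1 x); pose proof (Rle_abs M1); lra).
  assert (HM2' : forall x, Rabs (H t0 x) <= Rabs M2) by (intros x; pose proof (HM2 x); pose proof (Rle_abs M2); lra).
  split. exists (Rabs M1 * Rabs M2). intros x. rewrite Rabs_mult.
  apply Rmult_le_compat; auto using Rabs_pos.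
  intros d Hd. set (S := Rabs M1 + Rabs M2 + 2).
  assert (HS : 0 < S) by (unfold S; pose proof (Rabs_pos M1); pose proof (Rabs_pos M2); lra).
  set (d1 := Rmin 1 (d / S)).
  assert (Hd1 : 0 < d1) by (apply Rmin_pos; [lra| apply Rdiv_lt_0_compat; lra]).
  assert (Hd1' : d1 <= 1 /\ d1 <= d / S) by (split; [apply Rmin_l|apply Rmin_r]).
  destruct (HG2 d1 Hd1) as [h1 [Hh1 H1]]. destruct (HH2 d1 Hd1) as [h2 [Hh2 H2]].
  exists (Rmin h1 h2). split. apply Rmin_pos; auto. intros t Ht Htt x.
  assert (Ha : Rabs (t - t0) < h1) by (pose proof (Rmin_l h1 h2); lra).
  assert (Hb : Rabs (t - t0) < h2) by (pose proof (Rmin_r h1 h2); lra).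
  specialize (H1 t Ht Ha x). specialize (H2 t Ht Hb x).
  replace (G t x * H t x - G t0 x * H t0 x) with ((G t x - G t0 x) * (H t x - H t0 x) + (G t x - G t0 x) * H t0 x + G t0 x * (H t x - H t0 x)) by ring.
  pose proof (HM1' x). pose proof (HM2' x).
  assert (Rabs ((G t x - G t0 x) * (H t x - H t0 x)) <= d1 * d1).
  { rewrite Rabs_mult. apply Rmult_le_compat; auto using Rabs_pos; lra. }
  assert (Rabs ((G t x - G t0 x) * H t0 x) <= d1 * Rabs M2).
  { rewrite Rabs_mult. apply Rmult_le_compat; auto using Rabs_pos; lra. }
  assert (Rabs (G t0 x * (H t x - H t0 x)) <= Rabs M1 * d1).
  { rewrite Rabs_mult. apply Rmult_le_compat; auto using Rabs_pos; lra. }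
  assert (d1 * S <= d).
  { apply Rle_trans with (d / S * S). apply Rmult_le_compat_r; lra. right; field; lra. }
  assert (d1 * d1 <= d1) by nra.
  eapply Rle_lt_trans. apply Rabs_triang. eapply Rle_lt_trans. apply Rplus_le_compat_r. apply Rabs_triang.
  unfold S in *. nra.
Qed.

Lemma TameN_UCt eps n G : TameN eps n G -> UCt eps G.
Proof. destruct n; simpl; tauto. Qed.

Lemma TameN_weak eps n : forall G, TameN eps (S n) G -> TameN eps n G.
Proof. induction n; intros G H; simpl in *.
  - tauto.
  - destruct H as [H1 [G' [H2 H3]]]. split; auto. exists G'. split; auto. Qed.

Lemma TameN_plus eps n : forall G H, TameN eps n G -> TameN eps n H -> TameN eps n (fun t x => G t x + H t x).
Proof. induction n; intros G H HG HH.
  - simpl in *. split; auto. apply UCt_plus; tauto.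
  - destruct HG as [HG1 [G' [HG2 HG3]]]. destruct HH as [HH1 [H' [HH2 HH3]]].
    split. apply UCt_plus; auto. exists (fun t x => G' t x + H' t x). split.
    intros t x. apply (is_derive_plus (G t) (H t)); auto. apply IHn; auto. Qed.

Lemma TameN_mult eps n : forall G H, TameN eps n G -> TameN eps n H -> TameN eps n (fun t x => G t x * H t x).
Proof. induction n; intros G H HG HH.
  - simpl in *. split; auto. apply UCt_mult; tauto.
  - assert (HGw := TameN_weak _ _ _ HG). assert (HHw := TameN_weak _ _ _ HH).
    destruct HG as [HG1 [G' [HG2 HG3]]]. destruct HH as [HH1 [H' [HH2 HH3]]].
    split. apply UCt_mult; auto. exists (fun t x => G' t x * H t x + G t x * H' t x). split.
    + intros t x. assert (E := is_derive_mult (G t) (H t) x _ _ (HG2 t x) (HH2 t x) Rmult_comm).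
      exact E.
    + apply TameN_plus; apply IHn; auto. Qed.

Lemma TameN_const eps n : forall K, (forall t0, 0 <= t0 < eps -> cont_rel eps K t0) -> TameN eps n (fun t _ => K t).
Proof. induction n; intros K HK.
  - simpl. split; auto. intros t0 Ht0. split. exists (Rabs (K t0)). intros; lra.
    intros d Hd. destruct (HK t0 Ht0 d Hd) as [h [Hh H]]. exists h. split; auto.
  - split. exact (TameN_UCt _ _ _ (IHn K HK)). exists (fun _ _ => 0). split.
    intros t x. exact (is_derive_const _ _).
    apply (IHn (fun _ => 0)). intros t0 _ d Hd. exists 1. split. lra. intros. rewrite Rminus_diag, Rabs_R0. auto. Qed.

Lemma sin_lip u v : Rabs (sin u - sin v) <= Rabs (u - v).
Proof. destruct (MVT_gen sin v u cos) as [c [_ Hc]].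
  intros; apply is_derive_sin. intros; apply continuity_sin.
  rewrite Hc. rewrite Rabs_mult. pose proof (COS_bound c).
  assert (Rabs (cos c) <= 1) by (apply Rabs_le; lra).
  pose proof (Rabs_pos (u - v)). nra. Qed.

Lemma TameN_Tr eps n a : (forall t0, 0 <= t0 < eps -> cont_rel eps a t0) ->
  forall c, TameN eps n (fun t x => sin (x - a t + c)).
Proof. intros Ha. induction n; intros c.
  - simpl. split; auto. intros t0 Ht0. split. exists 1. intros x. apply Rabs_le. apply SIN_bound.
    intros d Hd. destruct (Ha t0 Ht0 d Hd) as [h [Hh H]]. exists h. split; auto.
    intros t Ht Htt x. eapply Rle_lt_trans. apply sin_lip.
    replace (x - a t + c - (x - a t0 + c)) with (- (a t - a t0)) by ring. rewrite Rabs_Ropp. auto.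
  - split. exact (TameN_UCt _ _ _ (IHn c)). exists (fun t x => sin (x - a t + (c + PI / 2))). split.
    + intros t x. auto_derive. auto. rewrite Rmult_1_l, cos_sin. f_equal. ring.
    + apply IHn. Qed.

Lemma TameN_rsum eps n N G : (forall i, (i < N)%nat -> TameN eps n (G i)) ->
  TameN eps n (fun t x => rsum N (fun i => G i t x)).
Proof. induction N; intros H; simpl.
  - apply (TameN_const eps n (fun _ => 0)). intros t0 _ d Hd. exists 1. split. lra. intros. rewrite Rminus_diag, Rabs_R0. auto.
  - apply (TameN_plus eps n (fun t x => rsum N (fun i => G i t x)) (G N)). apply IHN. intros; apply H; lia. apply H; lia. Qed.

Lemma TameN_rprod eps n N G : (forall i, (i < N)%nat -> TameN eps n (G i)) ->
  TameN eps n (fun t x => rprod N (fun i => G i t x)).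
Proof. induction N; intros H; simpl.
  - apply (TameN_const eps n (fun _ => 1)). intros t0 _ d Hd. exists 1. split. lra. intros. rewrite Rminus_diag, Rabs_R0. auto.
  - apply (TameN_mult eps n (fun t x => rprod N (fun i => G i t x)) (G N)). apply IHN. intros; apply H; lia. apply H; lia. Qed.

Lemma TameN_Derive_n eps n : forall G, TameN eps n G -> forall j, (j <= n)%nat ->
  (forall t x, ex_derive_n (G t) j x) /\ UCt eps (fun t x => Derive_n (G t) j x).
Proof. induction n; intros G HG j Hj.
  - replace j with 0%nat by lia. split. intros; exact I. exact (proj1 HG).
  - destruct j as [|j]. split. intros; exact I. exact (proj1 HG).
    destruct HG as [HG1 [G' [HG2 HG3]]].
    assert (ED : forall t, Derive (G t) = G' t).
    { intros t. apply functional_extensionality. intros x. apply is_derive_unique. apply HG2. }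
    destruct (IHn G' HG3 j ltac:(lia)) as [IH1 IH2]. split.
    + intros t x. destruct j as [|j]. simpl. exists (G' t x). apply HG2.
      apply (proj2 (ex_derive_n_S (G t) j x)). rewrite ED. apply IH1.
    + assert (E : (fun t x => Derive_n (G t) (S j) x) = (fun t x => Derive_n (G' t) j x)).
      { apply functional_extensionality. intros t. apply functional_extensionality. intros x.
        rewrite Derive_n_S'. rewrite ED. reflexivity. }
      rewrite E. exact IH2.
Qed.
Lemma PI_gt3 : 3 < PI.
Proof. pose proof PI2_3_2. lra. Qed.

Lemma sin_lb_half a : 0 <= a <= 1 -> a/2 <= sin_lb a.
Proof. intros Ha. unfold sin_lb, sin_approx, sin_term. simpl.
assert (0 <= a*a) by nra. assert (a*a <= 1) by nra.
assert (0 <= a*(a*a)) by nra. assert (a*(a*a) <= a) by nra.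
assert (0 <= a*(a*(a*(a*a)))) by nra. assert (0 <= a*(a*(a*(a*(a*(a*a)))))) by nra.
assert (a*(a*(a*(a*(a*(a*a))))) <= a) by nra.
lra. Qed.

Lemma sin_abs_lb w : Rabs w <= 1 -> Rabs w / 2 <= Rabs (sin w).
Proof. intros Hw. pose proof PI_gt3. destruct (Rle_dec 0 w).
  - rewrite Rabs_right in * by lra. destruct (SIN w) as [H1 _]; try lra.
    pose proof (sin_lb_half w ltac:(lra)). rewrite Rabs_right; lra.
  - rewrite Rabs_left in * by lra. destruct (SIN (-w)) as [H1 _]; try lra.
    pose proof (sin_lb_half (-w) ltac:(lra)). rewrite sin_neg in H1.
    rewrite Rabs_left1; lra. Qed.

Lemma cos_lip u v : Rabs (cos u - cos v) <= Rabs (u - v).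
Proof. rewrite !cos_sin. eapply Rle_trans. apply sin_lip. right. f_equal. ring. Qed.

Lemma cos_2piZ z : cos (2 * PI * IZR z) = 1.
Proof. destruct (Z_le_gt_dec 0 z).
  - destruct (Z_of_nat_complete z l) as [n Hn]. subst. rewrite <- INR_IZR_INZ.
    replace (2 * PI * INR n) with (0 + 2 * INR n * PI) by ring. rewrite cos_period. apply cos_0.
  - replace (2 * PI * IZR z) with (- (2 * PI * IZR (- z))) by (rewrite opp_IZR; ring).
    rewrite cos_neg. destruct (Z_of_nat_complete (-z)) as [n Hn]. lia. rewrite Hn.
    rewrite <- INR_IZR_INZ.
    replace (2 * PI * INR n) with (0 + 2 * INR n * PI) by ring. rewrite cos_period. apply cos_0. Qed.

Lemma not_2piZ w : 0 < Rabs w < 2 * PI -> ~ (exists z : Z, w = 2 * PI * IZR z).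
Proof. intros Hw [z Hz]. subst. pose proof PI_gt3.
  destruct (Z.eq_dec z 0). subst. simpl in Hw. rewrite Rmult_0_r, Rabs_R0 in Hw. lra.
  rewrite Rabs_mult in Hw. rewrite (Rabs_right (2*PI)) in Hw by lra.
  assert (1 <= Rabs (IZR z)).
  { destruct (Z_le_gt_dec 1 z). apply IZR_le in l. rewrite Rabs_right; simpl in *; lra.
    assert (z <= -1)%Z by lia. apply IZR_le in H0. rewrite Rabs_left; simpl in *; lra. }
  nra. Qed.

Lemma cos1_eqS1 x y : cos (x - y) = 1 -> eqS1 x y.
Proof. intros H. assert (Hs : sin ((x - y)/2) = 0).
  { pose proof (cos_2a_sin ((x - y) / 2)). replace (2 * ((x - y) / 2)) with (x - y) in H0 by field.
    rewrite H in H0. nra. }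
  destruct (sin_eq_0_0 _ Hs) as [z Hz]. exists z. lra. Qed.

Lemma eqS1_cos x y : eqS1 x y -> cos (x - y) = 1.
Proof. intros [z Hz]. rewrite Hz. apply cos_2piZ. Qed.

Lemma eqS1_sym x y : eqS1 x y -> eqS1 y x.
Proof. intros [z Hz]. exists (- z)%Z. rewrite opp_IZR. lra. Qed.

Lemma SmU_trig : forall n, Cn (fun _ => True) n sin /\ Cn (fun _ => True) n cos.
Proof. induction n.
  - split; intros x _ m Hm; replace m with 0%nat by lia; exact I.
  - destruct IHn as [H1 H2]. split; apply Cn_S; split.
    + intros x _. exists (cos x). apply is_derive_sin.
    + apply Cn_ext with cos. apply openU_T. intros y _. symmetry. apply is_derive_unique. apply is_derive_sin. auto.
    + intros x _. exists (- sin x). apply is_derive_cos.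
    + apply Cn_ext with (fun y => (-1) * sin y). apply openU_T. intros y _. symmetry.
      replace (-1 * sin y) with (- sin y) by ring.
      apply is_derive_unique. apply is_derive_cos.
      apply Cn_mult. apply openU_T. apply Cn_const, openU_T. auto. Qed.

Lemma SmU_sin : SmU (fun _ => True) sin.
Proof. intros n. apply SmU_trig. Qed.
Lemma SmU_cos : SmU (fun _ => True) cos.
Proof. intros n. apply SmU_trig. Qed.

Lemma fin_min (Q : nat -> R -> Prop) m : (forall j h h', 0 < h' <= h -> Q j h -> Q j h') ->
  (forall j, (j <= m)%nat -> exists h, 0 < h /\ Q j h) -> exists h, 0 < h /\ forall j, (j <= m)%nat -> Q j h.
Proof. intros Hmon. induction m; intros H.
  - destruct (H 0%nat (le_n _)) as [h [Hh HQ]]. exists h. split; auto. intros j Hj. replace j with 0%nat by lia. auto.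
  - destruct IHm as [h1 [Hh1 HQ1]]. intros; apply H; lia.
    destruct (H (S m) (le_n _)) as [h2 [Hh2 HQ2]].
    exists (Rmin h1 h2). split. apply Rmin_pos; auto. intros j Hj.
    destruct (Nat.eq_dec j (S m)). subst. apply Hmon with h2; auto. split. apply Rmin_pos; auto. apply Rmin_r.
    apply Hmon with h1; auto. split. apply Rmin_pos; auto. apply Rmin_l. apply HQ1; lia. Qed.

Lemma rprod_abs n f : Rabs (rprod n f) = rprod n (fun l => Rabs (f l)).
Proof. induction n; simpl. apply Rabs_R1. rewrite Rabs_mult, IHn. auto. Qed.

Lemma rprod_nonneg n g : (forall l, (l < n)%nat -> 0 <= g l) -> 0 <= rprod n g.
Proof. induction n; intros H; simpl. lra. apply Rmult_le_pos.
  apply IHn. intros; apply H; lia. apply H; lia. Qed.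

Lemma rprod_ge n f g : (forall l, (l < n)%nat -> 0 <= g l <= f l) -> rprod n g <= rprod n f.
Proof. induction n; intros H; simpl. lra.
  assert (Hg : 0 <= rprod n g) by (apply rprod_nonneg; intros; apply H; lia).
  apply Rmult_le_compat. exact Hg. apply H; lia. apply IHn; intros; apply H; lia. apply H; lia. Qed.

Lemma rprod_excl n i b : (i < n)%nat -> rprod n (fun l => if Nat.eq_dec l i then 1 else b) = b ^ (n - 1).
Proof. induction n; intros Hi. lia. simpl. destruct (Nat.eq_dec n i).
  - subst. replace (S i - 1)%nat with i by lia. rewrite Rmult_1_r.
    clear IHn Hi. assert (forall m, (m <= i)%nat -> rprod m (fun l => if Nat.eq_dec l i then 1 else b) = b ^ m).
    { induction m; intros Hm; simpl. auto. rewrite IHm by lia. destruct (Nat.eq_dec m i). lia. ring. }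
    rewrite Nat.sub_0_r. apply H. lia.
  - rewrite IHn by lia. rewrite Nat.sub_0_r. destruct n as [|n']. lia.
    replace (S n' - 1)%nat with n' by lia. simpl. ring. Qed.

Lemma rprod_const n b : rprod n (fun _ => b) = b ^ n.
Proof. induction n; simpl; auto. rewrite IHn. ring. Qed.
Definition Pt (D : R -> R) (A : R) (k : nat) (y : R) :=
  sum_f_R0 (fun m => (y - A) ^ m / INR (fact m) * Derive_n D m A) (k - 1).

Lemma Pt_smooth D A k : SmU (fun _ => True) (Pt D A k).
Proof. unfold Pt. apply SmU_sumf. apply openU_T. intros a _.
  apply SmU_ext with (fun y => (y - A) ^ a * (/ INR (fact a) * Derive_n D a A)). apply openU_T.
  intros y _. unfold Rdiv. ring.
  apply SmU_mult. apply openU_T. apply SmU_pow, openU_T. apply SmU_const, openU_T. Qed.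

Lemma Pt_A D A k : Pt D A k A = D A.
Proof. unfold Pt. generalize (k - 1)%nat. intros n. induction n; simpl.
  - field.
  - rewrite IHn. rewrite Rminus_diag. unfold Rdiv. simpl. ring. Qed.

Lemma ball_center A r : 0 < r -> ballU A r A.
Proof. intros. unfold ballU. rewrite Rminus_diag, Rabs_R0. auto. Qed.

Lemma smooth_near_SmU D A r : smooth_near D A r -> SmU (ballU A r) D.
Proof. intros H n x Hx m Hm. apply H. exact Hx. Qed.

Lemma d1_nonzero D A B : local_diffeo_germ D A B -> Derive D A <> 0.
Proof. intros [HDA [r [s [G [Hr [Hs [HD [HG [H1 H2]]]]]]]]].
  assert (HexD : ex_derive D A).
  { exact (HD A ltac:(rewrite Rminus_diag, Rabs_R0; auto) 1%nat). }
  assert (HexG : ex_derive G (D A)).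
  { rewrite HDA. exact (HG B ltac:(rewrite Rminus_diag, Rabs_R0; auto) 1%nat). }
  assert (Hc := is_derive_comp G D A _ _ (Derive_correct _ _ HexG) (Derive_correct _ _ HexD)).
  assert (Hid : is_derive (fun x => G (D x)) A 1).
  { apply is_derive_ext_loc with (fun x => x).
    apply loc_ball with r; auto. intros y Hy. symmetry. apply H1. exact Hy.
    exact (is_derive_id _). }
  assert (E : scal (Derive D A) (Derive G (D A)) = 1).
  { transitivity (Derive (fun x => G (D x)) A).
    symmetry. apply is_derive_unique. exact Hc. apply is_derive_unique. exact Hid. }
  unfold scal in E; simpl in E; unfold mult in E; simpl in E.
  intros H0. rewrite H0 in E. lra. Qed.

Lemma Taylor_D D A k r : (1 <= k)%nat -> 0 < r -> SmU (ballU A r) D ->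
  exists M d, 0 < d /\ 0 <= M /\ forall x, A < x < A + d -> Rabs (D x - Pt D A k x) <= M * (x - A) ^ k.
Proof. intros Hk Hr Hh.
  assert (HA := ball_center A r Hr).
  assert (Hc : cont_at (Derive_n D k) A). apply ex_derive_cont. exact (Hh (S k) A HA (S k) (le_n _)).
  destruct (cont_bound_near _ _ Hc) as [d1 [Hd1 Hb]].
  exists ((Rabs (Derive_n D k A) + 1) / INR (fact k)), (Rmin d1 r). split. apply Rmin_pos; auto.
  split. apply Rmult_le_pos. pose proof (Rabs_pos (Derive_n D k A)); lra. left; apply Rinv_0_lt_compat, fact_pos.
  intros x Hx. destruct k as [|k]. lia.
  destruct (Taylor_Lagrange D k A x) as [z [Hz Heq]]. lra.
  { intros t Ht m Hm. refine (Hh m t _ m (le_n _)). unfold ballU.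
    rewrite Rabs_right by lra. assert (Rmin d1 r <= r) by apply Rmin_r. lra. }
  unfold Pt. replace (S k - 1)%nat with k by lia.
  rewrite Heq. replace (sum_f_R0 (fun m : nat => (x - A) ^ m / INR (fact m) * Derive_n D m A) k +
    (x - A) ^ S k / INR (fact (S k)) * Derive_n D (S k) z -
    sum_f_R0 (fun m : nat => (x - A) ^ m / INR (fact m) * Derive_n D m A) k) with
    ((x - A) ^ S k / INR (fact (S k)) * Derive_n D (S k) z) by ring.
  rewrite Rabs_mult. unfold Rdiv. rewrite Rabs_mult. rewrite (Rabs_right ((x - A) ^ S k)).
  2:{ apply Rle_ge, pow_le. lra. }
  rewrite Rabs_right. 2:{ apply Rle_ge. left. apply Rinv_0_lt_compat, fact_pos. }
  assert (Rabs (Derive_n D (S k) z) <= Rabs (Derive_n D (S k) A) + 1).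
  { apply Hb. rewrite Rabs_right by lra. assert (Rmin d1 r <= d1) by apply Rmin_l. lra. }
  assert (0 <= (x - A) ^ S k) by (apply pow_le; lra).
  assert (0 < / INR (fact (S k))) by (apply Rinv_0_lt_compat, fact_pos).
  replace ((Rabs (Derive_n D (S k) A) + 1) * / INR (fact (S k)) * (x - A) ^ S k) with
     ((x - A) ^ S k * / INR (fact (S k)) * (Rabs (Derive_n D (S k) A) + 1)) by ring.
  apply Rmult_le_compat_l; auto. apply Rmult_le_pos; lra.
Qed.

Lemma MVT_bound f a b L : (forall z, Rmin a b <= z <= Rmax a b -> ex_derive f z /\ Rabs (Derive f z) <= L) ->
  Rabs (f b - f a) <= L * Rabs (b - a).
Proof. intros H. destruct (MVT_gen f a b (Derive f)) as [c [Hc Heq]].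
  intros x Hx. apply Derive_correct. apply H. lra.
  intros x Hx. apply ex_derive_cpt. apply H. lra.
  rewrite Heq. rewrite Rabs_mult. apply Rmult_le_compat_r. apply Rabs_pos. apply H. auto. Qed.

Lemma lowerD D A r : 0 < r -> SmU (ballU A r) D -> Derive D A <> 0 ->
  exists d, 0 < d /\ forall x y, A <= x <= A + d -> A <= y <= A + d -> Rabs (Derive D A) / 2 * Rabs (x - y) <= Rabs (D x - D y).
Proof. intros Hr HD Hd1.
  assert (HA := ball_center A r Hr).
  assert (Hc : cont_at (Derive D) A). apply ex_derive_cont. exact (HD 2%nat A HA 2%nat (le_n _)).
  assert (Hp : 0 < Rabs (Derive D A)) by (apply Rabs_pos_lt; auto).
  destruct (Hc (Rabs (Derive D A) / 2)) as [d1 [Hd1' Hc']]. lra.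
  exists (Rmin d1 r / 2). split. assert (0 < Rmin d1 r) by (apply Rmin_pos; auto). lra.
  intros x y Hx Hy.
  assert (Hm : Rmin d1 r <= d1 /\ Rmin d1 r <= r) by (split; [apply Rmin_l|apply Rmin_r]).
  destruct (MVT_gen D y x (Derive D)) as [c [Hcc Heq]].
  - intros z Hz. apply Derive_correct. refine (HD 1%nat z _ 1%nat (le_n _)). unfold ballU.
    assert (Rmin y x >= A) by (apply Rle_ge, Rmin_glb; lra). assert (Rmax y x <= A + Rmin d1 r / 2) by (apply Rmax_lub; lra).
    rewrite Rabs_right; lra.
  - intros z Hz. apply ex_derive_cpt. refine (HD 1%nat z _ 1%nat (le_n _)). unfold ballU.
    assert (Rmin y x >= A) by (apply Rle_ge, Rmin_glb; lra). assert (Rmax y x <= A + Rmin d1 r / 2) by (apply Rmax_lub; lra).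
    rewrite Rabs_right; lra.
  - rewrite Heq. rewrite Rabs_mult.
    assert (Rmin y x >= A) by (apply Rle_ge, Rmin_glb; lra). assert (Rmax y x <= A + Rmin d1 r / 2) by (apply Rmax_lub; lra).
    assert (Rabs (Derive D c - Derive D A) < Rabs (Derive D A) / 2).
    { apply Hc'. rewrite Rabs_right; lra. }
    assert (Rabs (Derive D A) / 2 <= Rabs (Derive D c)).
    { pose proof (Rabs_triang_inv (Derive D A) (Derive D c)). rewrite Rabs_minus_sym in H1. lra. }
    rewrite Rabs_minus_sym. apply Rmult_le_compat_r. apply Rabs_pos. auto. Qed.

Lemma fDP_bound D A B k f : (1 <= k)%nat -> local_diffeo_germ D A B -> smooth f ->
  exists C d, 0 < d /\ forall x, A < x < A + d -> Rabs (f (D x) - f (Pt D A k x)) <= C * (x - A) ^ k.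
Proof. intros Hk HDg Hf.
  destruct HDg as [HDA [r [s [G [Hr [Hs [HD [HG [H1 H2]]]]]]]]].
  assert (HDs := smooth_near_SmU D A r HD).
  destruct (Taylor_D D A k r Hk Hr HDs) as [M [dT [HdT [HM HT]]]].
  assert (Hfc : cont_at (Derive f) B). apply ex_derive_cont. exact (Hf 2%nat B).
  destruct (cont_bound_near _ _ Hfc) as [df [Hdf Hfb]].
  assert (HcD : cont_at D A). apply ex_derive_cont. apply (SmU_ex_derive _ _ _ HDs). apply ball_center; auto.
  assert (HcP : cont_at (Pt D A k) A). apply ex_derive_cont. apply (SmU_ex_derive _ _ _ (Pt_smooth D A k)). exact I.
  destruct (HcD df Hdf) as [d1 [Hd1 HD1]]. destruct (HcP df Hdf) as [d2 [Hd2 HP2]].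
  rewrite Pt_A in HP2. rewrite HDA in HD1, HP2.
  exists ((Rabs (Derive f B) + 1) * M), (Rmin (Rmin dT r) (Rmin d1 d2)). split.
  repeat apply Rmin_pos; auto.
  intros x Hx.
  assert (Hm : Rmin (Rmin dT r) (Rmin d1 d2) <= dT /\ Rmin (Rmin dT r) (Rmin d1 d2) <= d1 /\ Rmin (Rmin dT r) (Rmin d1 d2) <= d2).
  { pose proof (Rmin_l (Rmin dT r) (Rmin d1 d2)). pose proof (Rmin_r (Rmin dT r) (Rmin d1 d2)).
    pose proof (Rmin_l dT r). pose proof (Rmin_l d1 d2). pose proof (Rmin_r d1 d2). lra. }
  assert (Hxa : Rabs (x - A) < Rmin (Rmin dT r) (Rmin d1 d2)) by (rewrite Rabs_right; lra).
  assert (HDx : Rabs (D x - B) < df) by (apply HD1; lra).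
  assert (HPx : Rabs (Pt D A k x - B) < df) by (apply HP2; lra).
  eapply Rle_trans. apply (MVT_bound f (Pt D A k x) (D x) (Rabs (Derive f B) + 1)).
  - intros z Hz. split. exact (Hf 1%nat z).
    apply Hfb. assert (Rmin (Pt D A k x) (D x) <= z <= Rmax (Pt D A k x) (D x)) by exact Hz.
    unfold Rmin, Rmax in H. destruct (Rle_dec (Pt D A k x) (D x));
    apply Rabs_lt_between in HDx; apply Rabs_lt_between in HPx; apply Rabs_def1; lra.
  - rewrite Rmult_assoc. apply Rmult_le_compat_l. pose proof (Rabs_pos (Derive f B)); lra.
    apply HT. lra.
Qed.
Definition xs (A t : R) (i : nat) := A + INR (S i) * t.

Lemma loc_T h x n : SmU (fun _ => True) h -> locally x (fun y => forall m, (m <= n)%nat -> ex_derive_n h m y).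
Proof. intros H. apply loc_ball with 1. lra. intros y _ m Hm. exact (H m y I m (le_n _)). Qed.

Lemma loc_U U h x n : openU U -> U x -> SmU U h -> locally x (fun y => forall m, (m <= n)%nat -> ex_derive_n h m y).
Proof. intros HU Hx H. destruct (HU x Hx) as [d [Hd Hd']]. apply loc_ball with d; auto.
  intros y Hy m Hm. exact (H m y (Hd' y Hy) m (le_n _)). Qed.

Lemma smooth_SmU f : smooth f -> SmU (fun _ => True) f.
Proof. intros H n x _ m _. apply H. Qed.

Lemma SmU_minus U g h : openU U -> SmU U g -> SmU U h -> SmU U (fun y => g y - h y).
Proof. intros HU Hg Hh. apply SmU_ext with (fun y => g y + (-1) * h y); auto.
  intros; ring. apply SmU_plus; auto. apply SmU_mult; auto. apply SmU_const; auto. Qed.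

Lemma rsum_ge_term n f a : (forall i, (i < n)%nat -> 0 <= f i) -> (a < n)%nat -> f a <= rsum n f.
Proof. induction n; intros H Ha. lia. simpl. destruct (Nat.eq_dec a n).
  - subst. assert (0 <= rsum n f). { clear IHn Ha. induction n; simpl. lra.
      assert (0 <= f n) by (apply H; lia). assert (0 <= rsum n f) by (apply IHn; intros; apply H; lia). lra. }
    lra.
  - assert (0 <= f n) by (apply H; lia). assert (f a <= rsum n f) by (apply IHn; [intros; apply H; lia | lia]). lra. Qed.

Lemma fam_bound (c : nat -> R -> R) x0 n : (forall a, (a < n)%nat -> cont_at (c a) x0) ->
  exists d M, 0 < d /\ forall a x, (a < n)%nat -> Rabs (x - x0) < d -> Rabs (c a x) <= M.
Proof. intros H. destruct n as [|n].
  - exists 1, 0. split. lra. intros. lia.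
  - destruct (fin_min (fun a h => forall x, Rabs (x - x0) < h -> Rabs (c a x) <= Rabs (c a x0) + 1) n) as [d [Hd HQ]].
    + intros j h h' Hh HQ x Hx. apply HQ. lra.
    + intros j Hj. destruct (cont_bound_near (c j) x0 (H j ltac:(lia))) as [d [Hd HQ]]. exists d; auto.
    + exists d, (rsum (S n) (fun a => Rabs (c a x0) + 1)). split; auto. intros a x Ha Hx.
      eapply Rle_trans. apply HQ; auto; lia. apply (rsum_ge_term (S n) (fun a => Rabs (c a x0) + 1) a).
      intros; pose proof (Rabs_pos (c i x0)); lra. auto. Qed.

Lemma forward_phi D A k eps F f : (1 <= k)%nat -> 0 < eps -> F 0 = f -> CinfS1 f ->
  (forall t, 0 < t < eps -> CinfS1 (F t) /\ forall i, (i < k)%nat -> F t (xs A t i) = F t (Pt D A k (xs A t i))) ->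
  Cm_continuous_family (2 * k) eps F ->
  forall j, (j < k)%nat -> Derive_n (fun y => f (Pt D A k y) - f y) j A = 0.
Proof. intros Hk Heps HF0 [Hf Hfp] HFt HCm j Hj.
  set (P := Pt D A k).
  assert (HP : SmU (fun _ => True) P) by apply Pt_smooth.
  destruct (comp_formula (fun _ => True) P openU_T HP j) as [c [Hc1 [Hc2 Hc3]]].
  set (Phi := fun x => Derive_n (fun y => f (P y) - f y) j x).
  assert (HfS := smooth_SmU f Hf).
  assert (HfP : SmU (fun _ => True) (fun y => f (P y))) by (apply SmU_comp; auto; apply openU_T).
  assert (HPhi : forall x, Phi x = rsum (S j) (fun a => Derive_n f a (P x) * c a x) - Derive_n f j x).
  { intros x. unfold Phi. rewrite Derive_n_minus. rewrite Hc3; auto. apply loc_T; auto. apply loc_T; auto. }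
  assert (Hcont : cont_at Phi A).
  { apply ex_derive_cont. unfold Phi.
    assert (Hh : SmU (fun _ => True) (fun y => f (P y) - f y)) by (apply SmU_minus; auto; apply openU_T).
    exact (Hh (S j) A I (S j) (le_n _)). }
  destruct (fam_bound c A (S j)) as [dc [M [Hdc HM]]].
  { intros a _. apply ex_derive_cont. apply (SmU_ex_derive _ _ _ (Hc1 a)). exact I. }
  assert (HM0 : 0 <= M) by (pose proof (HM 0%nat A ltac:(lia) ltac:(rewrite Rminus_diag, Rabs_R0; auto)); pose proof (Rabs_pos (c 0%nat A)); lra).
  change (Phi A = 0). apply Rabs_small. intros e He.
  destruct (Hcont (e/2)) as [eta [Heta Hce]]. lra.
  set (d := e / (2 * (INR (S j) * M + 1))).
  assert (Hd : 0 < d). { unfold d. apply Rdiv_lt_0_compat. lra. pose proof (pos_INR (S j)). nra. }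
  destruct (HCm 0 ltac:(lra) d Hd) as [h0 [Hh0 HC]].
  assert (HkR : 1 <= INR k) by (apply (le_INR 1); auto).
  set (t := Rmin (Rmin eps h0) (Rmin (eta / INR k) (dc / INR k)) / 2).
  assert (Ht : 0 < t < eps /\ t < h0 /\ INR k * t < eta /\ INR k * t < dc).
  { assert (0 < eta / INR k) by (apply Rdiv_lt_0_compat; lra).
    assert (0 < dc / INR k) by (apply Rdiv_lt_0_compat; lra).
    pose proof (Rmin_l (Rmin eps h0) (Rmin (eta / INR k) (dc / INR k))).
    pose proof (Rmin_r (Rmin eps h0) (Rmin (eta / INR k) (dc / INR k))).
    pose proof (Rmin_l eps h0). pose proof (Rmin_r eps h0).
    pose proof (Rmin_l (eta / INR k) (dc / INR k)). pose proof (Rmin_r (eta / INR k) (dc / INR k)).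
    assert (0 < Rmin (Rmin eps h0) (Rmin (eta / INR k) (dc / INR k))) by (repeat apply Rmin_pos; lra).
    assert (INR k * (eta / INR k) = eta) by (field; lra).
    assert (INR k * (dc / INR k) = dc) by (field; lra).
    unfold t. repeat split; try lra; nra. }
  destruct Ht as [[Ht0 Hte] [Hth [Hteta Htdc]]].
  destruct (HFt t (conj Ht0 Hte)) as [[HFts _] HFz].
  assert (HFS := smooth_SmU _ HFts).
  set (g := fun x => F t (P x) - F t x).
  assert (Hg : SmU (fun _ => True) g).
  { apply SmU_minus. apply openU_T. apply SmU_comp; auto; apply openU_T. auto. }
  destruct (rolle_chain g Hg j (k - 1 - j) (xs A t)) as [w [_ Hw]].
  { intros i Hi. unfold xs. rewrite !S_INR. nra. }
  { intros i Hi. unfold g. rewrite <- HFz. ring. lia. }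
  destruct (Hw 0%nat ltac:(lia)) as [[Hw1 Hw2] Hw3].
  replace (k - 1 - j + j)%nat with (k - 1)%nat in Hw2 by lia.
  set (xi := w 0%nat) in *.
  assert (Hxi : Rabs (xi - A) <= INR k * t).
  { unfold xs in Hw1, Hw2. rewrite S_INR in Hw1. replace (S (k - 1)) with k in Hw2 by lia.
    pose proof (pos_INR 0). rewrite Rabs_right; simpl in Hw1; nra. }
  assert (Hgxi : Derive_n g j xi = rsum (S j) (fun a => Derive_n (F t) a (P xi) * c a xi) - Derive_n (F t) j xi).
  { unfold g. rewrite Derive_n_minus. rewrite Hc3; auto.
    apply loc_T. apply SmU_comp; auto; apply openU_T. apply loc_T; auto. }
  assert (Hdiff : Rabs (Phi xi) <= e / 2).
  { replace (Phi xi) with (Phi xi - Derive_n g j xi) by (rewrite Hw3; ring). rewrite HPhi, Hgxi.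
    replace (rsum (S j) (fun a => Derive_n f a (P xi) * c a xi) - Derive_n f j xi -
      (rsum (S j) (fun a => Derive_n (F t) a (P xi) * c a xi) - Derive_n (F t) j xi)) with
      (rsum (S j) (fun a => (Derive_n f a (P xi) - Derive_n (F t) a (P xi)) * c a xi) -
       (Derive_n f j xi - Derive_n (F t) j xi)).
    2:{ rewrite <- (Rminus_0_r (rsum (S j) (fun a => (Derive_n f a (P xi) - Derive_n (F t) a (P xi)) * c a xi))).
        replace (rsum (S j) (fun a => (Derive_n f a (P xi) - Derive_n (F t) a (P xi)) * c a xi)) with
          (rsum (S j) (fun a => Derive_n f a (P xi) * c a xi) + (-1) * rsum (S j) (fun a => Derive_n (F t) a (P xi) * c a xi)).
        ring. rewrite <- rsum_scal, <- rsum_plus. apply rsum_ext. intros; ring. }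
    assert (HCa : forall a x, (a <= 2 * k)%nat -> Rabs (Derive_n f a x - Derive_n (F t) a x) < d).
    { intros a x Ha. rewrite <- HF0. rewrite Rabs_minus_sym. apply HC; auto. lra. rewrite Rminus_0_r, Rabs_right; lra. }
    eapply Rle_trans. apply Rabs_triang. rewrite Rabs_Ropp.
    assert (H1 : Rabs (rsum (S j) (fun a => (Derive_n f a (P xi) - Derive_n (F t) a (P xi)) * c a xi)) <= INR (S j) * (d * M)).
    { apply rsum_abs_bound. intros a Ha. rewrite Rabs_mult. apply Rmult_le_compat; auto using Rabs_pos.
      left. apply HCa. lia. apply HM; auto. lra. }
    assert (H2 : Rabs (Derive_n f j xi - Derive_n (F t) j xi) <= d) by (left; apply HCa; lia).
    assert (INR (S j) * (d * M) + d = e / 2).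
    { unfold d. field. pose proof (pos_INR (S j)). nra. }
    lra. }
  replace (Phi A) with ((Phi A - Phi xi) + Phi xi) by ring.
  eapply Rle_lt_trans. apply Rabs_triang.
  assert (Rabs (Phi xi - Phi A) < e / 2) by (apply Hce; lra).
  rewrite Rabs_minus_sym in H. lra.
Qed.
Lemma forward_gimel D A B k f : (1 <= k)%nat -> local_diffeo_germ D A B -> smooth f ->
  (forall j, (j < k)%nat -> Derive_n (fun y => f (Pt D A k y) - f y) j A = 0) ->
  forall j, (j < k)%nat -> Derive_n f j A = Derive_n (fun x => f (D x)) j A.
Proof. intros Hk HDg Hf Hj0.
  destruct (fDP_bound D A B k f Hk HDg Hf) as [C1 [d1 [Hd1 HC1]]].
  destruct HDg as [HDA [r [s [G [Hr [Hs [HD [HG [H1 H2]]]]]]]]].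
  assert (HDs := smooth_near_SmU D A r HD).
  assert (HfS := smooth_SmU f Hf).
  assert (Hb1 : openU (ballU A 1)) by apply openU_ball.
  assert (Hbr : openU (ballU A r)) by apply openU_ball.
  assert (Hh0 : SmU (ballU A 1) (fun y => f (Pt D A k y) - f y)).
  { apply SmU_sub. exact Hb1. apply SmU_minus. apply openU_T. apply SmU_comp. apply openU_T. exact HfS. apply Pt_smooth. exact HfS. }
  destruct (OC1 _ A 1 k Hk ltac:(lra) Hh0 Hj0) as [C0 [d0 [Hd0 HC0]]].
  assert (Hh1 : SmU (ballU A r) (fun y => f (D y) - f y)).
  { apply SmU_minus; auto. apply SmU_comp; auto. apply SmU_sub; auto. }
  assert (HO := OC2 _ A r k (C1 + C0) (Rmin d0 d1) Hk Hr Hh1 (Rmin_pos _ _ Hd0 Hd1)).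
  intros j Hj.
  assert (E : Derive_n (fun y => f (D y) - f y) j A = 0).
  { apply HO; auto. intros x Hx.
    assert (Rmin d0 d1 <= d0) by apply Rmin_l. assert (Rmin d0 d1 <= d1) by apply Rmin_r.
    replace (f (D x) - f x) with ((f (D x) - f (Pt D A k x)) + (f (Pt D A k x) - f x)) by ring.
    eapply Rle_trans. apply Rabs_triang. rewrite Rmult_plus_distr_r.
    apply Rplus_le_compat. apply HC1; lra. apply HC0; lra. }
  assert (Em : Derive_n (fun y => f (D y) - f y) j A = Derive_n (fun y => f (D y)) j A - Derive_n f j A).
  { apply Derive_n_minus.
    - apply (loc_U (ballU A r)). exact Hbr. apply ball_center; auto. apply SmU_comp; [exact Hbr|exact HfS|exact HDs].
    - apply loc_T; exact HfS. }
  lra. Qed.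

Lemma converse_H D A B k f : (1 <= k)%nat -> local_diffeo_germ D A B -> smooth f ->
  (forall j, (j < k)%nat -> Derive_n f j A = Derive_n (fun x => f (D x)) j A) ->
  exists C d, 0 < d /\ forall x, A < x < A + d -> Rabs (f (Pt D A k x) - f x) <= C * (x - A) ^ k.
Proof. intros Hk HDg Hf Hj.
  destruct (fDP_bound D A B k f Hk HDg Hf) as [C1 [d1 [Hd1 HC1]]].
  destruct HDg as [HDA [r [s [G [Hr [Hs [HD [HG [H1 H2]]]]]]]]].
  assert (HDs := smooth_near_SmU D A r HD).
  assert (HfS := smooth_SmU f Hf).
  assert (Hbr : openU (ballU A r)) by apply openU_ball.
  assert (Hh1 : SmU (ballU A r) (fun y => f (D y) - f y)).
  { apply SmU_minus; auto. apply SmU_comp; auto. apply SmU_sub; auto. }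
  destruct (OC1 _ A r k Hk Hr Hh1) as [C0 [d0 [Hd0 HC0]]].
  { intros j Hjk. rewrite Derive_n_minus. rewrite Hj; auto. ring.
    - apply (loc_U (ballU A r)). exact Hbr. apply ball_center; auto. apply SmU_comp; [exact Hbr|exact HfS|exact HDs].
    - apply loc_T; exact HfS. }
  exists (C1 + C0), (Rmin d0 d1). split. apply Rmin_pos; auto. intros x Hx.
  assert (Rmin d0 d1 <= d0) by apply Rmin_l. assert (Rmin d0 d1 <= d1) by apply Rmin_r.
  replace (f (Pt D A k x) - f x) with (- (f (D x) - f (Pt D A k x)) + (f (D x) - f x)) by ring.
  eapply Rle_trans. apply Rabs_triang. rewrite Rabs_Ropp. rewrite Rmult_plus_distr_r.
  apply Rplus_le_compat. apply HC1; lra. apply HC0; lra. Qed.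
Lemma nat_diff_INR i l : i <> l -> 1 <= Rabs (INR (S i) - INR (S l)).
Proof. intros H. destruct (proj1 (Nat.lt_gt_cases i l) H) as [Hl|Hl].
  - assert (INR (S i) <= INR l) by (apply le_INR; lia). rewrite (S_INR l). rewrite Rabs_left; lra.
  - assert (INR (S l) <= INR i) by (apply le_INR; lia). rewrite (S_INR i). rewrite Rabs_right; lra. Qed.

Lemma xs_bound A t i k : (i < k)%nat -> 0 <= t -> 0 <= xs A t i - A <= INR k * t.
Proof. intros Hi Ht. unfold xs. assert (INR (S i) <= INR k) by (apply le_INR; lia).
  pose proof (pos_INR (S i)). split; nra. Qed.

Lemma eps_exists D A B k : (1 <= k)%nat -> ~ eqS1 A B -> local_diffeo_germ D A B ->
  exists eps c0, 0 < eps /\ eps <= 1 /\ INR k * eps <= 1 /\ 0 < c0 /\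
   (forall t, 0 <= t < eps -> forall i m, (i < k)%nat -> (m < k)%nat -> c0 <= 1 - cos (xs A t i - Pt D A k (xs A t m))) /\
   (forall t, 0 <= t < eps -> forall i, (i < k)%nat -> Rabs (Pt D A k (xs A t i) - B) < 1) /\
   (forall t, 0 < t < eps -> forall i l, (i < k)%nat -> (l < k)%nat -> i <> l -> Pt D A k (xs A t i) <> Pt D A k (xs A t l)).
Proof. intros Hk HAB HDg.
  assert (Hd1 := d1_nonzero D A B HDg).
  destruct HDg as [HDA [r [s [G [Hr [Hs [HD [HG [H1 H2]]]]]]]]].
  assert (HDs := smooth_near_SmU D A r HD).
  set (th := A - B). set (cth := 1 - cos th).
  assert (Hcth : 0 < cth).
  { unfold cth. pose proof (COS_bound th). destruct (Req_dec (cos th) 1).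
    exfalso. apply HAB. apply cos1_eqS1. exact H0. lra. }
  set (rho := cth / 2).
  assert (HcP : cont_at (Pt D A k) A). apply ex_derive_cont. apply (SmU_ex_derive _ _ _ (Pt_smooth D A k)). exact I.
  unfold cont_at in HcP. rewrite Pt_A, HDA in HcP.
  destruct (HcP (Rmin (rho/2) 1)) as [dP [HdP HPb]]. apply Rmin_pos; unfold rho; lra.
  destruct (lowerD D A r Hr HDs Hd1) as [dL [HdL HL]].
  destruct (Taylor_D D A k r Hk Hr HDs) as [M [dT [HdT [HM HT]]]].
  set (e1 := Rmin 1 (Rmin (rho/2) (Rmin dP (Rmin dL dT)))).
  assert (He1 : 0 < e1 /\ e1 <= 1 /\ e1 <= rho/2 /\ e1 <= dP /\ e1 <= dL /\ e1 <= dT).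
  { unfold e1. pose proof (Rmin_l 1 (Rmin (rho/2) (Rmin dP (Rmin dL dT)))).
    pose proof (Rmin_r 1 (Rmin (rho/2) (Rmin dP (Rmin dL dT)))).
    pose proof (Rmin_l (rho/2) (Rmin dP (Rmin dL dT))). pose proof (Rmin_r (rho/2) (Rmin dP (Rmin dL dT))).
    pose proof (Rmin_l dP (Rmin dL dT)). pose proof (Rmin_r dP (Rmin dL dT)).
    pose proof (Rmin_l dL dT). pose proof (Rmin_r dL dT).
    assert (0 < Rmin 1 (Rmin (rho/2) (Rmin dP (Rmin dL dT)))) by (repeat apply Rmin_pos; unfold rho; lra).
    lra. }
  destruct He1 as [He1 [He1a [He1b [He1c [He1d He1e]]]]].
  assert (HkR : 1 <= INR k) by (apply (le_INR 1); auto).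
  assert (Hd1p : 0 < Rabs (Derive D A)) by (apply Rabs_pos_lt; auto).
  assert (Hkk : 0 < INR k ^ k) by (apply pow_lt; lra).
  set (e2 := Rabs (Derive D A) / (4 * (M + 1) * INR k ^ k)).
  assert (He2 : 0 < e2) by (unfold e2; apply Rdiv_lt_0_compat; auto; nra).
  set (eps := Rmin (e1 / INR k) e2 / 2).
  assert (Heps : 0 < eps /\ INR k * eps <= e1 / 2 /\ eps <= e2 / 2).
  { unfold eps. pose proof (Rmin_l (e1 / INR k) e2). pose proof (Rmin_r (e1 / INR k) e2).
    assert (0 < e1 / INR k) by (apply Rdiv_lt_0_compat; lra).
    assert (0 < Rmin (e1 / INR k) e2) by (apply Rmin_pos; lra).
    assert (INR k * (e1 / INR k) = e1) by (field; lra).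
    repeat split; try lra. nra. }
  destruct Heps as [Heps [Hkeps Heps2]].
  exists eps, rho. split; auto. split. nra. split. lra. split. unfold rho; lra.
  assert (Hx : forall t, 0 <= t < eps -> forall i, (i < k)%nat -> 0 <= xs A t i - A < e1).
  { intros t Ht i Hi. destruct (xs_bound A t i k Hi ltac:(lra)). split; auto. nra. }
  assert (Hy : forall t, 0 <= t < eps -> forall i, (i < k)%nat -> Rabs (Pt D A k (xs A t i) - B) < Rmin (rho/2) 1).
  { intros t Ht i Hi. apply HPb. destruct (Hx t Ht i Hi). rewrite Rabs_right; lra. }
  split; [|split].
  - intros t Ht i m Hi Hm.
    assert (Hz : Rabs ((xs A t i - Pt D A k (xs A t m)) - th) < cth / 2).
    { unfold th. replace (xs A t i - Pt D A k (xs A t m) - (A - B)) with ((xs A t i - A) - (Pt D A k (xs A t m) - B)) by ring.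
      eapply Rle_lt_trans. apply Rabs_triang. rewrite Rabs_Ropp.
      pose proof (Hy t Ht m Hm). pose proof (Rmin_l (rho/2) 1). destruct (Hx t Ht i Hi).
      rewrite (Rabs_right (xs A t i - A)) by lra. unfold rho in *. lra. }
    pose proof (cos_lip (xs A t i - Pt D A k (xs A t m)) th). unfold cth in *. unfold rho.
    pose proof (Rle_abs (cos (xs A t i - Pt D A k (xs A t m)) - cos th)). lra.
  - intros t Ht i Hi. pose proof (Hy t Ht i Hi). pose proof (Rmin_r (rho/2) 1). lra.
  - intros t Ht i l Hi Hl Hil Heq.
    assert (Hk2 : (2 <= k)%nat) by lia.
    destruct (Hx t ltac:(lra) i Hi) as [Hxi1 Hxi2]. destruct (Hx t ltac:(lra) l Hl) as [Hxl1 Hxl2].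
    assert (Hlow := HL (xs A t i) (xs A t l) ltac:(lra) ltac:(lra)).
    assert (Hdx : t <= Rabs (xs A t i - xs A t l)).
    { unfold xs. replace (A + INR (S i) * t - (A + INR (S l) * t)) with ((INR (S i) - INR (S l)) * t) by ring.
      rewrite Rabs_mult, (Rabs_right t) by lra. pose proof (nat_diff_INR i l Hil). nra. }
    assert (Hpi : 0 < xs A t i - A) by (unfold xs; pose proof (lt_0_INR (S i) ltac:(lia)); nra).
    assert (Hpl : 0 < xs A t l - A) by (unfold xs; pose proof (lt_0_INR (S l) ltac:(lia)); nra).
    assert (HTi := HT (xs A t i) ltac:(lra)). assert (HTl := HT (xs A t l) ltac:(lra)).
    assert (Ht1 : t <= 1) by nra.
    assert (Hpow : forall x, 0 < x - A <= INR k * t -> (x - A) ^ k <= INR k ^ k * (t * t)).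
    { intros x Hxx. apply Rle_trans with ((INR k * t) ^ k). apply pow_incr. lra.
      rewrite Rpow_mult_distr. apply Rmult_le_compat_l. lra.
      replace k with (2 + (k - 2))%nat by lia. rewrite pow_add. replace (t ^ 2) with (t * t) by ring.
      assert (t ^ (k - 2) <= 1) by (apply pow_le1; lra). assert (0 <= t ^ (k - 2)) by (apply pow_le; lra).
      assert (0 <= t * t) by nra. nra. }
    destruct (xs_bound A t i k Hi ltac:(lra)). destruct (xs_bound A t l k Hl ltac:(lra)).
    assert (Hb1 := Hpow (xs A t i) ltac:(lra)). assert (Hb2 := Hpow (xs A t l) ltac:(lra)).
    assert (HDD : Rabs (D (xs A t i) - D (xs A t l)) <= 2 * M * (INR k ^ k * (t * t))).
    { replace (D (xs A t i) - D (xs A t l)) with ((D (xs A t i) - Pt D A k (xs A t i)) - (D (xs A t l) - Pt D A k (xs A t l))) by (rewrite Heq; ring).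
      eapply Rle_trans. apply Rabs_triang. rewrite Rabs_Ropp.
      assert (M * (xs A t i - A) ^ k <= M * (INR k ^ k * (t * t))) by (apply Rmult_le_compat_l; auto).
      assert (M * (xs A t l - A) ^ k <= M * (INR k ^ k * (t * t))) by (apply Rmult_le_compat_l; auto).
      lra. }
    assert (Ht2 : t < e2 / 2) by lra.
    assert (Hfin : 2 * M * (INR k ^ k * (t * t)) < Rabs (Derive D A) / 2 * t).
    { assert (2 * (M + 1) * INR k ^ k * t < Rabs (Derive D A) / 2).
      { apply Rle_lt_trans with (2 * (M + 1) * INR k ^ k * (e2 / 2)).
        apply Rmult_le_compat_l. nra. lra.
        unfold e2. replace (2 * (M + 1) * INR k ^ k * (Rabs (Derive D A) / (4 * (M + 1) * INR k ^ k) / 2))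
          with (Rabs (Derive D A) / 4) by (field; nra). lra. }
      nra. }
    assert (Rabs (Derive D A) / 2 * t <= Rabs (Derive D A) / 2 * Rabs (xs A t i - xs A t l)) by (apply Rmult_le_compat_l; lra).
    lra.
Qed.
Definition nuC (D : R -> R) (A : R) (k : nat) (t : R) (n : nat) : R :=
  if Nat.even n then xs A t (Nat.div2 n) else Pt D A k (xs A t (Nat.div2 n)).

Lemma nuC_even D A k t i : nuC D A k t (2 * i) = xs A t i.
Proof. unfold nuC. rewrite Nat.even_mul, Nat.div2_double. reflexivity. Qed.

Lemma nuC_odd D A k t i : nuC D A k t (2 * i + 1) = Pt D A k (xs A t i).
Proof. unfold nuC. rewrite Nat.add_1_r. rewrite Nat.even_succ, <- Nat.negb_even, Nat.even_mul, Nat.div2_succ_double.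
  reflexivity. Qed.

Lemma parity_eq i j : Nat.even i = Nat.even j -> Nat.div2 i = Nat.div2 j -> i = j.
Proof. intros H1 H2. rewrite (Nat.div2_odd i), (Nat.div2_odd j). rewrite <- !Nat.negb_even. rewrite H1, H2. auto. Qed.

Lemma div2_lt i k : (i < 2 * k)%nat -> (Nat.div2 i < k)%nat.
Proof. intros H. pose proof (Nat.div2_odd i). destruct (Nat.odd i); simpl in H0; lia. Qed.

Lemma rsum_sumf n f : rsum (S n) f = sum_f_R0 f n.
Proof. induction n. simpl. ring. change (rsum (S (S n)) f) with (rsum (S n) f + f (S n)). rewrite IHn. reflexivity. Qed.

Lemma alg_poly eps g : (exists (q : nat -> R) n, forall t, g t = sum_f_R0 (fun m => q m * t ^ m) n) -> algebraic_on eps g.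
Proof. intros [q [n Hq]].
  exists (S (S n)), (fun a b => match b with O => (if le_dec a n then - q a else 0) | 1%nat => (if Nat.eq_dec a 0 then 1 else 0) | _ => 0 end).
  split. exists 0%nat, 1%nat. split. lia. split. lia. simpl. lra.
  intros t _.
  rewrite (rsum_ext (S (S n)) _ (fun a => (if le_dec a n then - q a else 0) * t ^ a + (if Nat.eq_dec a 0 then 1 else 0) * t ^ a * g t)).
  2:{ intros a Ha. rewrite !rsum_shift. rewrite rsum_zero. simpl. ring. intros i0 _. simpl. ring. }
  rewrite rsum_plus.
  rewrite (rsum_single (S (S n)) (fun a => (if Nat.eq_dec a 0 then 1 else 0) * t ^ a * g t) 0%nat).
  2: lia. 2:{ intros l Hl Hl0. destruct (Nat.eq_dec l 0). lia. ring. }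
  simpl (if Nat.eq_dec 0 0 then 1 else 0).
  change (rsum (S (S n)) (fun a => (if le_dec a n then - q a else 0) * t ^ a)) with
    (rsum (S n) (fun a => (if le_dec a n then - q a else 0) * t ^ a) + (if le_dec (S n) n then - q (S n) else 0) * t ^ (S n)).
  destruct (le_dec (S n) n). lia.
  rewrite (rsum_ext (S n) _ (fun a => (-1) * (q a * t ^ a))).
  2:{ intros a Ha. destruct (le_dec a n). ring. lia. }
  rewrite rsum_scal, rsum_sumf, <- Hq. simpl. ring. Qed.

Lemma cont_Ico eps g : (forall t, cont_at g t) -> cont_on_Ico eps g.
Proof. intros H t0 _ d Hd. destruct (H t0 d Hd) as [h [Hh H']]. exists h. split; auto. Qed.

Lemma xs_ex_derive A i t : ex_derive (fun t => xs A t i) t.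
Proof. unfold xs. auto_derive. auto. Qed.

Lemma Pxs_ex_derive D A k i t : ex_derive (fun t => Pt D A k (xs A t i)) t.
Proof. apply (ex_derive_comp (Pt D A k) (fun t => xs A t i)). apply (SmU_ex_derive _ _ _ (Pt_smooth D A k)). exact I.
  apply xs_ex_derive. Qed.

Lemma curve_germ D A k eps : 0 < eps -> alg_curve_germ k eps (nuC D A k).
Proof. intros He. split; auto. intros i Hi. unfold nuC. destruct (Nat.even i); split.
  - apply cont_Ico. intros t. apply ex_derive_cont. apply xs_ex_derive.
  - apply alg_poly. exists (fun m => match m with O => A | 1%nat => INR (S (Nat.div2 i)) | _ => 0 end), 1%nat.
    intros t. unfold xs. simpl. ring.
  - apply cont_Ico. intros t. apply ex_derive_cont. apply Pxs_ex_derive.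
  - apply alg_poly. exists (fun m => INR (S (Nat.div2 i)) ^ m / INR (fact m) * Derive_n D m A), (k - 1)%nat.
    intros t. unfold Pt. apply sum_eq. intros m _. unfold xs.
    replace (A + INR (S (Nat.div2 i)) * t - A) with (INR (S (Nat.div2 i)) * t) by ring.
    rewrite Rpow_mult_distr. unfold Rdiv. ring. Qed.

Lemma config_ok D A B k eps c0 : (1 <= k)%nat -> 0 < eps -> INR k * eps <= 1 -> 0 < c0 ->
   (forall t, 0 <= t < eps -> forall i m, (i < k)%nat -> (m < k)%nat -> c0 <= 1 - cos (xs A t i - Pt D A k (xs A t m))) ->
   (forall t, 0 <= t < eps -> forall i, (i < k)%nat -> Rabs (Pt D A k (xs A t i) - B) < 1) ->
   (forall t, 0 < t < eps -> forall i l, (i < k)%nat -> (l < k)%nat -> i <> l -> Pt D A k (xs A t i) <> Pt D A k (xs A t l)) ->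
   forall t, 0 < t < eps -> in_config k (nuC D A k t).
Proof. intros Hk He Hke Hc0 Hcos HyB Hyy t Ht i j Hi Hj Hij.
  pose proof PI_gt3.
  assert (Ha := div2_lt i k Hi). assert (Hb := div2_lt j k Hj).
  unfold nuC. destruct (Nat.even i) eqn:Ei; destruct (Nat.even j) eqn:Ej.
  - assert (Hab : Nat.div2 i <> Nat.div2 j) by (intros E; apply Hij; apply parity_eq; congruence).
    apply not_2piZ. unfold xs.
    replace (A + INR (S (Nat.div2 i)) * t - (A + INR (S (Nat.div2 j)) * t)) with ((INR (S (Nat.div2 i)) - INR (S (Nat.div2 j))) * t) by ring.
    rewrite Rabs_mult, (Rabs_right t) by lra. pose proof (nat_diff_INR _ _ Hab).
    assert (INR (S (Nat.div2 i)) <= INR k) by (apply le_INR; lia).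
    assert (INR (S (Nat.div2 j)) <= INR k) by (apply le_INR; lia).
    pose proof (pos_INR (S (Nat.div2 i))). pose proof (pos_INR (S (Nat.div2 j))).
    assert (Rabs (INR (S (Nat.div2 i)) - INR (S (Nat.div2 j))) <= INR k) by (apply Rabs_le; lra).
    split. nra. nra.
  - intros HE. apply eqS1_cos in HE. pose proof (Hcos t ltac:(lra) _ _ Ha Hb). lra.
  - intros HE. apply eqS1_sym in HE. apply eqS1_cos in HE. pose proof (Hcos t ltac:(lra) _ _ Hb Ha). lra.
  - assert (Hab : Nat.div2 i <> Nat.div2 j) by (intros E; apply Hij; apply parity_eq; congruence).
    apply not_2piZ. split.
    + apply Rabs_pos_lt. intros E. apply (Hyy t Ht _ _ Ha Hb Hab). lra.
    + pose proof (HyB t ltac:(lra) _ Ha). pose proof (HyB t ltac:(lra) _ Hb).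
      replace (Pt D A k (xs A t (Nat.div2 i)) - Pt D A k (xs A t (Nat.div2 j))) with
        ((Pt D A k (xs A t (Nat.div2 i)) - B) - (Pt D A k (xs A t (Nat.div2 j)) - B)) by ring.
      eapply Rle_lt_trans. apply Rabs_triang. rewrite Rabs_Ropp. lra.
Qed.
Section Conv.
Variables (D : R -> R) (A : R) (k : nat) (f : R -> R).

Definition Hf (y : R) := f (Pt D A k y) - f y.
Definition fac1 (i : nat) (t x : R) (l : nat) := if Nat.eq_dec l i then 1 else sin (x - xs A t l).
Definition fac2 (t x : R) (m : nat) := 1 - cos (x - Pt D A k (xs A t m)).
Definition Bas (i : nat) (t x : R) := rprod k (fac1 i t x) * rprod k (fac2 t x).
Definition Kc (i : nat) (t : R) := Hf (xs A t i) / Bas i t (xs A t i).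
Definition psi (t x : R) := rsum k (fun i => Kc i t * Bas i t x).
Definition Ff (t : R) := fun x => f x + psi t x.

Lemma psi_smooth t : SmU (fun _ => True) (psi t).
Proof. assert (HU := openU_T). unfold psi. apply SmU_rsum; auto. intros i _.
  apply SmU_mult; auto. apply SmU_const; auto. unfold Bas. apply SmU_mult; auto.
  - apply SmU_rprod; auto. intros l _. unfold fac1. destruct (Nat.eq_dec l i). apply SmU_const; auto.
    apply SmU_comp; auto. apply SmU_sin. apply SmU_minus; auto. apply SmU_id; auto. apply SmU_const; auto.
  - apply SmU_rprod; auto. intros m _. unfold fac2. apply SmU_minus; auto. apply SmU_const; auto.
    apply SmU_comp; auto. apply SmU_cos. apply SmU_minus; auto. apply SmU_id; auto. apply SmU_const; auto. Qed.

Lemma sin2pi x : sin (x + 2 * PI) = sin x.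
Proof. replace (x + 2 * PI) with (x + 2 * INR 1 * PI) by (simpl; ring). apply sin_period. Qed.
Lemma cos2pi x : cos (x + 2 * PI) = cos x.
Proof. replace (x + 2 * PI) with (x + 2 * INR 1 * PI) by (simpl; ring). apply cos_period. Qed.

Lemma psi_periodic t : periodic (psi t).
Proof. intros x. unfold psi. apply rsum_ext. intros i _. f_equal. unfold Bas. f_equal.
  - apply rprod_ext. intros l _. unfold fac1. destruct (Nat.eq_dec l i); auto.
    replace (x + 2 * PI - xs A t l) with ((x - xs A t l) + 2 * PI) by ring. apply sin2pi.
  - apply rprod_ext. intros l _. unfold fac2.
    replace (x + 2 * PI - Pt D A k (xs A t l)) with ((x - Pt D A k (xs A t l)) + 2 * PI) by ring. rewrite cos2pi. auto. Qed.

Lemma rprod_nonzero n g : (forall l, (l < n)%nat -> g l <> 0) -> rprod n g <> 0.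
Proof. induction n; intros H; simpl. lra. apply Rmult_integral_contrapositive. split.
  apply IHn. intros; apply H; lia. apply H; lia. Qed.

Lemma sin_diff_lb t i l : 0 < t -> INR k * t <= 1 -> (i < k)%nat -> (l < k)%nat -> i <> l ->
  t / 2 <= Rabs (sin (xs A t i - xs A t l)).
Proof. intros Ht Hkt Hi Hl Hil. unfold xs.
  replace (A + INR (S i) * t - (A + INR (S l) * t)) with ((INR (S i) - INR (S l)) * t) by ring.
  pose proof (nat_diff_INR _ _ Hil).
  assert (INR (S i) <= INR k) by (apply le_INR; lia). assert (INR (S l) <= INR k) by (apply le_INR; lia).
  pose proof (pos_INR (S i)). pose proof (pos_INR (S l)).
  assert (Rabs (INR (S i) - INR (S l)) <= INR k) by (apply Rabs_le; lra).
  assert (Hw : Rabs ((INR (S i) - INR (S l)) * t) <= 1) by (rewrite Rabs_mult, (Rabs_right t); nra).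
  pose proof (sin_abs_lb _ Hw). rewrite Rabs_mult, (Rabs_right t) in H5 by lra. nra. Qed.

Lemma Den_lb t i c0 : 0 < t -> INR k * t <= 1 -> (i < k)%nat -> 0 < c0 ->
  (forall m, (m < k)%nat -> c0 <= 1 - cos (xs A t i - Pt D A k (xs A t m))) ->
  (t / 2) ^ (k - 1) * c0 ^ k <= Rabs (Bas i t (xs A t i)).
Proof. intros Ht Hkt Hi Hc0 Hc. unfold Bas. rewrite Rabs_mult. apply Rmult_le_compat.
  - apply pow_le; lra.
  - apply pow_le; lra.
  - rewrite <- (rprod_excl k i (t/2) Hi). rewrite rprod_abs. apply rprod_ge. intros l Hl. unfold fac1.
    destruct (Nat.eq_dec l i). rewrite Rabs_R1. lra. split. lra. apply sin_diff_lb; auto.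
  - rewrite <- rprod_const. rewrite rprod_abs. apply rprod_ge. intros m Hm. unfold fac2.
    specialize (Hc m Hm). rewrite Rabs_right; lra. Qed.

Lemma Den_nonzero t i c0 : 0 < t -> INR k * t <= 1 -> (i < k)%nat -> 0 < c0 ->
  (forall m, (m < k)%nat -> c0 <= 1 - cos (xs A t i - Pt D A k (xs A t m))) ->
  Bas i t (xs A t i) <> 0.
Proof. intros Ht Hkt Hi Hc0 Hc E. pose proof (Den_lb t i c0 Ht Hkt Hi Hc0 Hc). rewrite E, Rabs_R0 in H.
  assert (0 < (t / 2) ^ (k - 1) * c0 ^ k) by (apply Rmult_lt_0_compat; apply pow_lt; lra). lra. Qed.

Lemma psi_y t i : (i < k)%nat -> psi t (Pt D A k (xs A t i)) = 0.
Proof. intros Hi. unfold psi. apply rsum_zero. intros i' _. unfold Bas.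
  rewrite (rprod_zero k (fac2 t (Pt D A k (xs A t i))) i Hi). ring.
  unfold fac2. rewrite Rminus_diag, cos_0. ring. Qed.

Lemma psi_x t i : (i < k)%nat -> Bas i t (xs A t i) <> 0 -> psi t (xs A t i) = Hf (xs A t i).
Proof. intros Hi Hne. unfold psi. rewrite (rsum_single k _ i Hi).
  unfold Kc. field. auto.
  intros l Hl Hli. unfold Bas. rewrite (rprod_zero k (fac1 l t (xs A t i)) i Hi). ring.
  unfold fac1. destruct (Nat.eq_dec i l). lia. rewrite Rminus_diag, sin_0. auto. Qed.

End Conv.
Lemma SmU_xs A i : SmU (fun _ => True) (fun t => xs A t i).
Proof. assert (HU := openU_T). unfold xs. apply SmU_plus; auto. apply SmU_const; auto.
  apply SmU_mult; auto. apply SmU_const; auto. apply SmU_id; auto. Qed.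

Lemma SmU_Pxs D A k i : SmU (fun _ => True) (fun t => Pt D A k (xs A t i)).
Proof. apply SmU_comp. apply openU_T. apply Pt_smooth. apply SmU_xs. Qed.

Lemma Kc_cont_pos D A k f eps c0 i t0 : smooth f -> (i < k)%nat -> 0 < c0 -> INR k * eps <= 1 ->
  (forall t, 0 <= t < eps -> forall i m, (i < k)%nat -> (m < k)%nat -> c0 <= 1 - cos (xs A t i - Pt D A k (xs A t m))) ->
  0 < t0 < eps -> cont_at (Kc D A k f i) t0.
Proof. intros Hfs Hi Hc0 Hke Hc Ht0. assert (HU := openU_T). assert (HfS := smooth_SmU f Hfs).
  apply cpt_cont. unfold Kc.
  apply (continuity_pt_div (fun t => Hf D A k f (xs A t i)) (fun t => Bas D A k i t (xs A t i))).
  - apply ex_derive_cpt. apply (SmU_ex_derive (fun _ => True)); auto. unfold Hf.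
    apply SmU_minus; auto. apply SmU_comp; auto. apply SmU_Pxs. apply SmU_comp; auto. apply SmU_xs.
  - apply ex_derive_cpt. apply (SmU_ex_derive (fun _ => True)); auto. unfold Bas. apply SmU_mult; auto.
    + apply (SmU_rprod _ k (fun l t => fac1 A i t (xs A t i) l)); auto. intros l _. unfold fac1.
      destruct (Nat.eq_dec l i). apply SmU_const; auto.
      apply SmU_comp; auto. apply SmU_sin. apply SmU_minus; auto; apply SmU_xs.
    + apply (SmU_rprod _ k (fun m t => fac2 D A k t (xs A t i) m)); auto. intros m _. unfold fac2.
      apply SmU_minus; auto. apply SmU_const; auto.
      apply SmU_comp; auto. apply SmU_cos. apply SmU_minus; auto. apply SmU_xs. apply SmU_Pxs.
  - apply (Den_nonzero D A k t0 i c0); try lra; auto. nra. intros m Hm. apply Hc; auto; lra. Qed.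

Lemma Kc_bound D A k f eps c0 C dH i t : (1 <= k)%nat -> (i < k)%nat -> 0 < c0 -> INR k * eps <= 1 ->
  (forall t, 0 <= t < eps -> forall i m, (i < k)%nat -> (m < k)%nat -> c0 <= 1 - cos (xs A t i - Pt D A k (xs A t m))) ->
  (forall x, A < x < A + dH -> Rabs (Hf D A k f x) <= C * (x - A) ^ k) ->
  0 < t < eps -> INR k * t < dH ->
  Rabs (Kc D A k f i t) <= Rabs C * INR k ^ k * 2 ^ (k - 1) / c0 ^ k * t.
Proof. intros Hk Hi Hc0 Hke Hc HH Ht HtH.
  assert (HkR : 1 <= INR k) by (apply (le_INR 1); auto).
  destruct (xs_bound A t i k Hi ltac:(lra)) as [Hx1 Hx2].
  assert (Hxp : 0 < xs A t i - A) by (unfold xs; pose proof (lt_0_INR (S i) ltac:(lia)); nra).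
  assert (HLB := Den_lb D A k t i c0 ltac:(lra) ltac:(nra) Hi Hc0 ltac:(intros m Hm; apply Hc; auto; lra)).
  assert (HLBp : 0 < (t / 2) ^ (k - 1) * c0 ^ k) by (apply Rmult_lt_0_compat; apply pow_lt; lra).
  assert (HHx : Rabs (Hf D A k f (xs A t i)) <= Rabs C * (INR k ^ k * t ^ k)).
  { eapply Rle_trans. apply HH. lra. eapply Rle_trans. apply Rmult_le_compat_r. apply pow_le; lra. apply Rle_abs.
    apply Rmult_le_compat_l. apply Rabs_pos. rewrite <- Rpow_mult_distr. apply pow_incr. lra. }
  unfold Kc. unfold Rdiv. rewrite Rabs_mult, Rabs_inv.
  apply Rle_trans with (Rabs C * (INR k ^ k * t ^ k) * / ((t / 2) ^ (k - 1) * c0 ^ k)).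
  - apply Rmult_le_compat. apply Rabs_pos. left; apply Rinv_0_lt_compat. lra. auto.
    apply Rinv_le_contravar; auto.
  - destruct k as [|k']. lia. replace (S k' - 1)%nat with k' by lia.
    replace (t ^ S k') with (t * t ^ k') by (simpl; ring).
    unfold Rdiv. rewrite Rpow_mult_distr. rewrite pow_inv.
    assert (0 < t ^ k') by (apply pow_lt; lra). assert (0 < 2 ^ k') by (apply pow_lt; lra).
    assert (0 < c0 ^ S k') by (apply pow_lt; lra).
    right. field. repeat split; lra. Qed.

Lemma Kc_cont D A B k f eps c0 i t0 : (1 <= k)%nat -> smooth f -> (i < k)%nat -> 0 < c0 -> INR k * eps <= 1 ->
  (forall t, 0 <= t < eps -> forall i m, (i < k)%nat -> (m < k)%nat -> c0 <= 1 - cos (xs A t i - Pt D A k (xs A t m))) ->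
  local_diffeo_germ D A B ->
  (forall j, (j < k)%nat -> Derive_n f j A = Derive_n (fun x => f (D x)) j A) ->
  0 <= t0 < eps -> cont_rel eps (Kc D A k f i) t0.
Proof. intros Hk Hfs Hi Hc0 Hke Hc HDg Hj Ht0.
  destruct (Req_dec t0 0) as [E|E].
  - subst t0. destruct (converse_H D A B k f Hk HDg Hfs Hj) as [C [dH [HdH HH]]].
    assert (HK0 : Kc D A k f i 0 = 0).
    { unfold Kc, Hf. unfold xs. rewrite Rmult_0_r, Rplus_0_r. rewrite Pt_A.
      assert (f A = f (D A)) by (apply (Hj 0%nat); lia). rewrite <- H. unfold Rdiv. ring. }
    assert (HkR : 1 <= INR k) by (apply (le_INR 1); auto).
    set (KK := Rabs C * INR k ^ k * 2 ^ (k - 1) / c0 ^ k).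
    assert (HKK : 0 <= KK).
    { unfold KK. apply Rmult_le_pos. apply Rmult_le_pos. apply Rmult_le_pos. apply Rabs_pos.
      apply pow_le; lra. apply pow_le; lra. left; apply Rinv_0_lt_compat, pow_lt; lra. }
    intros d Hd. exists (Rmin (dH / INR k) (d / (KK + 1))). split.
    apply Rmin_pos; apply Rdiv_lt_0_compat; lra.
    intros t Ht Htt. rewrite HK0, Rminus_0_r. rewrite Rminus_0_r in Htt.
    destruct (Req_dec t 0) as [Et|Et]. subst t. rewrite HK0, Rabs_R0. auto.
    rewrite Rabs_right in Htt by lra.
    assert (t < dH / INR k) by (pose proof (Rmin_l (dH / INR k) (d / (KK + 1))); lra).
    assert (t < d / (KK + 1)) by (pose proof (Rmin_r (dH / INR k) (d / (KK + 1))); lra).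
    eapply Rle_lt_trans. apply (Kc_bound D A k f eps c0 C dH i t); auto. lra.
    { apply Rlt_le_trans with (INR k * (dH / INR k)). apply Rmult_lt_compat_l; lra. right; field; lra. }
    fold KK. apply Rle_lt_trans with (KK * (d / (KK + 1))). apply Rmult_le_compat_l; lra.
    apply Rlt_le_trans with ((KK + 1) * (d / (KK + 1))). apply Rmult_lt_compat_r. apply Rdiv_lt_0_compat; lra. lra.
    right; field; lra.
  - apply cont_at_rel. apply (Kc_cont_pos D A k f eps c0); auto. lra. Qed.
Lemma xs_cont_rel eps A i t0 : cont_rel eps (fun t => xs A t i) t0.
Proof. apply cont_at_rel. apply ex_derive_cont. apply xs_ex_derive. Qed.
Lemma Pxs_cont_rel eps D A k i t0 : cont_rel eps (fun t => Pt D A k (xs A t i)) t0.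
Proof. apply cont_at_rel. apply ex_derive_cont. apply Pxs_ex_derive. Qed.

Lemma const_cont_rel eps c t0 : cont_rel eps (fun _ => c) t0.
Proof. intros d Hd. exists 1. split. lra. intros. rewrite Rminus_diag, Rabs_R0. auto. Qed.

Lemma psi_tame D A k f eps n : (forall i, (i < k)%nat -> forall t0, 0 <= t0 < eps -> cont_rel eps (Kc D A k f i) t0) ->
  TameN eps n (psi D A k f).
Proof. intros HK. unfold psi.
  apply (TameN_rsum eps n k (fun i t x => Kc D A k f i t * Bas D A k i t x)). intros i Hi.
  apply (TameN_mult eps n (fun t _ => Kc D A k f i t) (fun t x => Bas D A k i t x)).
  apply TameN_const. intros t0 Ht0. apply HK; auto.
  unfold Bas. apply (TameN_mult eps n (fun t x => rprod k (fac1 A i t x)) (fun t x => rprod k (fac2 D A k t x))).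
  - apply (TameN_rprod eps n k (fun l t x => fac1 A i t x l)). intros l Hl. unfold fac1.
    destruct (Nat.eq_dec l i).
    + apply (TameN_const eps n (fun _ => 1)). intros; apply const_cont_rel.
    + replace (fun t x => sin (x - xs A t l)) with (fun t x => sin (x - (fun t => xs A t l) t + 0)).
      apply TameN_Tr. intros; apply xs_cont_rel.
      apply functional_extensionality; intros t; apply functional_extensionality; intros x. rewrite Rplus_0_r. auto.
  - apply (TameN_rprod eps n k (fun m t x => fac2 D A k t x m)). intros m Hm. unfold fac2.
    replace (fun t x => 1 - cos (x - Pt D A k (xs A t m))) with
      (fun t x => (fun _ _ => 1) t x + (fun _ _ => -1) t x * (fun t x => sin (x - (fun t => Pt D A k (xs A t m)) t + PI / 2)) t x).
    2:{ apply functional_extensionality; intros t; apply functional_extensionality; intros x.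
        rewrite cos_sin. replace (PI / 2 + (x - Pt D A k (xs A t m))) with (x - Pt D A k (xs A t m) + PI / 2) by ring. ring. }
    apply TameN_plus. apply (TameN_const eps n (fun _ => 1)). intros; apply const_cont_rel.
    apply TameN_mult. apply (TameN_const eps n (fun _ => -1)). intros; apply const_cont_rel.
    apply TameN_Tr. intros; apply Pxs_cont_rel. Qed.

Lemma Kc_zero D A B k f i : local_diffeo_germ D A B -> f A = f (D A) -> Kc D A k f i 0 = 0.
Proof. intros HDg H. unfold Kc, Hf. unfold xs. rewrite Rmult_0_r, Rplus_0_r. rewrite Pt_A.
  rewrite <- H. unfold Rdiv. ring. Qed.

Lemma Ff_Derive_n D A k f t j x : smooth f -> Derive_n (Ff D A k f t) j x = Derive_n f j x + Derive_n (psi D A k f t) j x.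
Proof. intros Hf. unfold Ff. apply Derive_n_plus. apply loc_T. apply smooth_SmU; auto. apply loc_T. apply psi_smooth. Qed.

Lemma conv_limit D A B k f eps c0 : (1 <= k)%nat -> local_diffeo_germ D A B -> 0 < eps -> 0 < c0 -> INR k * eps <= 1 ->
  (forall t, 0 <= t < eps -> forall i m, (i < k)%nat -> (m < k)%nat -> c0 <= 1 - cos (xs A t i - Pt D A k (xs A t m))) ->
  gimel k D A f -> limit_algebra k eps (nuC D A k) f.
Proof. intros Hk HDg He Hc0 Hke Hc [[Hfs Hfp] Hj].
  assert (HK : forall i, (i < k)%nat -> forall t0, 0 <= t0 < eps -> cont_rel eps (Kc D A k f i) t0).
  { intros i Hi t0 Ht0. apply (Kc_cont D A B k f eps c0); auto. }
  assert (HfA : f A = f (D A)) by (apply (Hj 0%nat); lia).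
  exists (Ff D A k f). split; [|split; [|split]].
  - apply functional_extensionality. intros x. unfold Ff, psi. rewrite rsum_zero. ring.
    intros i Hi. rewrite (Kc_zero D A B k f i HDg HfA). ring.
  - split; auto.
  - intros t Ht. split.
    + split.
      * intros n x. unfold Ff. apply ex_derive_n_plus. apply loc_T. apply smooth_SmU; auto. apply loc_T. apply psi_smooth.
      * intros x. unfold Ff. rewrite Hfp. rewrite psi_periodic. auto.
    + intros i Hi. rewrite nuC_even, nuC_odd. unfold Ff.
      rewrite psi_y by auto. rewrite psi_x; auto. unfold Hf. ring.
      apply (Den_nonzero D A k t i c0); try lra; auto. nra. intros m Hm. apply Hc; auto; lra.
  - intros t0 Ht0 d Hd.
    destruct (fin_min (fun j h => forall t, 0 <= t < eps -> Rabs (t - t0) < h -> forall x,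
        Rabs (Derive_n (psi D A k f t) j x - Derive_n (psi D A k f t0) j x) < d) (2 * k)) as [h [Hh HQ]].
    + intros j h h' Hh' HQ t Ht Htt x. apply HQ; auto. lra.
    + intros j Hj'. destruct (TameN_Derive_n eps (2 * k) (psi D A k f) (psi_tame D A k f eps (2 * k) HK) j Hj') as [_ HU].
      destruct (HU t0 Ht0) as [_ HU2]. destruct (HU2 d Hd) as [h [Hh HQ]]. exists h. split; auto.
    + exists h. split; auto. intros t Ht Htt j x Hj'.
      rewrite !Ff_Derive_n by auto.
      replace (Derive_n f j x + Derive_n (psi D A k f t) j x - (Derive_n f j x + Derive_n (psi D A k f t0) j x))
        with (Derive_n (psi D A k f t) j x - Derive_n (psi D A k f t0) j x) by ring.
      apply HQ; auto.
Qed.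

Lemma fwd_limit D A B k f eps : (1 <= k)%nat -> local_diffeo_germ D A B -> 0 < eps ->
  limit_algebra k eps (nuC D A k) f -> gimel k D A f.
Proof. intros Hk HDg He [F [HF0 [Hcf [Halg HCm]]]].
  split; auto. apply (forward_gimel D A B k f Hk HDg (proj1 Hcf)).
  apply (forward_phi D A k eps F f Hk He HF0 Hcf); auto.
  intros t Ht. destruct (Halg t Ht) as [HC Hi]. split; auto.
  intros i Hik. specialize (Hi i Hik). rewrite nuC_even, nuC_odd in Hi. auto. Qed.

Theorem mainTheorem17 (k : nat) (A B : R) (D : R -> R) :
  (1 <= k)%nat ->
  ~ eqS1 A B ->
  local_diffeo_germ D A B ->
  in_CDbar k (gimel k D A).
Proof. intros Hk HAB HDg.
  destruct (eps_exists D A B k Hk HAB HDg) as [eps [c0 [He [He1 [Hke [Hc0 [Hc [HyB Hyy]]]]]]]].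
  exists eps, (nuC D A k). split; [|split].
  - apply curve_germ; auto.
  - apply (config_ok D A B k eps c0); auto.
  - intros f. split.
    + apply (fwd_limit D A B k f eps); auto.
    + apply (conv_limit D A B k f eps c0); auto.
Qed.
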